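(* Let $Q$ be an automorphic loop and $x,y\in Q$. If either $x^{-1}(xy^2)=(xy)(x^{-1}y)$ or $x^{-1}(xy^2)=(x^{-1}y)(xy)$, then $xy=yx$.
   Context: A loop is a set with a binary operation in which all equations $ax=b$, $ya=b$ are uniquely solvable and which has a two-sided identity. For $a\in L$, $R_a:x\mapsto xa$, $L_a:x\mapsto ax$; the inner mapping group is the stabilizer of the identity in the group generated by all $R_a,L_a$. A loop is automorphic if every inner mapping is an automorphism. Automorphic loops are power associative, so $x^{-1}$ and $y^2$ are well defined. *)

(* Defs.v *)
Section Loops.
Variable T : Type.
Variable mul : T -> T -> T.
Variable e : T.

Definition is_loop : Prop :=
  (forall a b : T, exists x, mul a x = b /\ forall x', mul a x' = b -> x' = x) /\
  (forall a b : T, exists y, mul y a = b /\ forall y', mul y' a = b -> y' = y) /\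
  (forall x : T, mul e x = x /\ mul x e = x).

Definition Rmap (a : T) : T -> T := fun x => mul x a.
Definition Lmap (a : T) : T -> T := fun x => mul a x.

(* The multiplication group: the subgroup of Sym(T) generated by all R_a, L_a
   (closed under identity, composition and two-sided inverses). *)
Inductive in_mlt : (T -> T) -> Prop :=
| mlt_R a : in_mlt (Rmap a)
| mlt_L a : in_mlt (Lmap a)
| mlt_id : in_mlt (fun x => x)
| mlt_comp f g : in_mlt f -> in_mlt g -> in_mlt (fun x => f (g x))
| mlt_inv f g : in_mlt f -> (forall x, g (f x) = x) -> (forall x, f (g x) = x) ->
                in_mlt g.

Definition inner_mapping (f : T -> T) : Prop := in_mlt f /\ f e = e.

(* Automorphism of the loop (elements of the multiplication group are already bijections). *)
Definition is_automorphism (f : T -> T) : Prop :=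
  (exists g : T -> T, (forall x, g (f x) = x) /\ (forall x, f (g x) = x)) /\
  (forall x y, f (mul x y) = mul (f x) (f y)).

Definition automorphic_loop : Prop :=
  is_loop /\ forall f, inner_mapping f -> is_automorphism f.

End Loops.

(* Main.v *)
Require Import Defs.
From Stdlib Require Import ClassicalEpsilon.


Definition ldiv {T mul e} (HQ : automorphic_loop T mul e) (u v : T) : T :=
  proj1_sig (constructive_indefinite_description _ (proj1 (proj1 HQ) u v)).
Definition rdiv {T mul e} (HQ : automorphic_loop T mul e) (v u : T) : T :=
  proj1_sig (constructive_indefinite_description _ (proj1 (proj2 (proj1 HQ)) u v)).

Lemma d2 {T mul e} (HQ : automorphic_loop T mul e) u v : mul u (ldiv HQ u v) = v.
Proof. unfold ldiv. case (constructive_indefinite_description _ _); intros z Hp; simpl; destruct Hp as [Hz _]. exact Hz. Qed.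
Lemma d1 {T mul e} (HQ : automorphic_loop T mul e) u v : ldiv HQ u (mul u v) = v.
Proof. unfold ldiv. case (constructive_indefinite_description _ _); intros z Hp; simpl; destruct Hp as [Hz U].
  symmetry. apply U. reflexivity. Qed.
Lemma d4 {T mul e} (HQ : automorphic_loop T mul e) u v : mul (rdiv HQ u v) v = u.
Proof. unfold rdiv. case (constructive_indefinite_description _ _); intros z Hp; simpl; destruct Hp as [Hz _]. exact Hz. Qed.
Lemma d3 {T mul e} (HQ : automorphic_loop T mul e) u v : rdiv HQ (mul u v) v = u.
Proof. unfold rdiv. case (constructive_indefinite_description _ _); intros z Hp; simpl; destruct Hp as [Hz U].
  symmetry. apply U. reflexivity. Qed.
Lemma idl {T mul e} (HQ : automorphic_loop T mul e) u : mul e u = u.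
Proof. apply (proj2 (proj2 (proj1 HQ)) u). Qed.
Lemma idr {T mul e} (HQ : automorphic_loop T mul e) u : mul u e = u.
Proof. apply (proj2 (proj2 (proj1 HQ)) u). Qed.

Lemma mlt_ldiv {T mul e} (HQ : automorphic_loop T mul e) u : in_mlt T mul (ldiv HQ u).
Proof. apply (mlt_inv _ _ (Lmap T mul u)). apply mlt_L.
  intro; apply d1. intro; apply d2. Qed.
Lemma mlt_rdiv {T mul e} (HQ : automorphic_loop T mul e) u :
  in_mlt T mul (fun z => rdiv HQ z u).
Proof. apply (mlt_inv _ _ (Rmap T mul u)). apply mlt_R.
  intro; unfold Rmap; apply d3. intro; unfold Rmap; apply d4. Qed.

Lemma inner_aut {T mul e} (HQ : automorphic_loop T mul e) (f : T -> T) :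
  in_mlt T mul f -> f e = e -> forall u v, f (mul u v) = mul (f u) (f v).
Proof. intros H1 H2. apply (proj2 (proj2 HQ f (conj H1 H2))). Qed.

Lemma autL {T mul e} (HQ : automorphic_loop T mul e) p q u v :
  ldiv HQ (mul q p) (mul q (mul p (mul u v))) =
  mul (ldiv HQ (mul q p) (mul q (mul p u))) (ldiv HQ (mul q p) (mul q (mul p v))).
Proof.
  apply (inner_aut HQ (fun z => ldiv HQ (mul q p) (mul q (mul p z)))).
  - apply (mlt_comp _ _ (ldiv HQ (mul q p)) (fun z => mul q (mul p z))).
    apply mlt_ldiv. apply (mlt_comp _ _ (Lmap T mul q) (Lmap T mul p)); apply mlt_L.
  - rewrite (idr HQ). pose proof (d1 HQ (mul q p) e) as H. rewrite (idr HQ) in H. exact H.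
Qed.
Lemma autR {T mul e} (HQ : automorphic_loop T mul e) p q u v :
  rdiv HQ (mul (mul (mul u v) p) q) (mul p q) =
  mul (rdiv HQ (mul (mul u p) q) (mul p q)) (rdiv HQ (mul (mul v p) q) (mul p q)).
Proof.
  apply (inner_aut HQ (fun z => rdiv HQ (mul (mul z p) q) (mul p q))).
  - apply (mlt_comp _ _ (fun z => rdiv HQ z (mul p q)) (fun z => mul (mul z p) q)).
    apply mlt_rdiv. apply (mlt_comp _ _ (Rmap T mul q) (Rmap T mul p)); apply mlt_R.
  - rewrite (idl HQ). pose proof (d3 HQ e (mul p q)) as H. rewrite (idl HQ) in H. exact H.
Qed.
Lemma autT {T mul e} (HQ : automorphic_loop T mul e) p u v :
  ldiv HQ p (mul (mul u v) p) = mul (ldiv HQ p (mul u p)) (ldiv HQ p (mul v p)).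
Proof.
  apply (inner_aut HQ (fun z => ldiv HQ p (mul z p))).
  - apply (mlt_comp _ _ (ldiv HQ p) (Rmap T mul p)). apply mlt_ldiv. apply mlt_R.
  - rewrite (idl HQ). pose proof (d1 HQ p e) as H. rewrite (idr HQ) in H. exact H.
Qed.

Lemma invl {T mul e} (HQ : automorphic_loop T mul e) x a : mul x a = e -> mul a x = e.
Proof. intro Hxa.
  pose proof (idr HQ x) as F0.
  pose proof (d3 HQ e (mul x a)) as F1.
  pose proof (d3 HQ (mul (mul x a) x) e) as F2.
  pose proof (d3 HQ (rdiv HQ (mul (mul x e) e) (mul e e)) (rdiv HQ (mul (mul a e) e) (mul e e))) as F3.
  pose proof (d1 HQ (rdiv HQ (mul (mul x a) e) (mul a e)) (rdiv HQ (mul (mul x a) e) (mul a e))) as F4.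
  pose proof (d3 HQ (mul a e) e) as F5.
  pose proof Hxa as F6.
  pose proof (idl HQ x) as F7.
  pose proof (d2 HQ x (mul a x)) as F8.
  pose proof (d1 HQ (mul (mul x a) x) e) as F9.
  pose proof (autT HQ x x a) as F10.
  pose proof (idl HQ e) as F11.
  pose proof (autR HQ e e x a) as F12.
  pose proof (eq_sym F6) as E1.
  pose proof (eq_trans (eq_sym (f_equal2 mul E1 (@eq_refl _ x))) (eq_sym (eq_sym F7))) as E2.
  pose proof F0 as E3.
  pose proof (eq_trans (f_equal2 mul E2 (@eq_refl _ e)) (eq_sym (f_equal2 mul E3 (@eq_refl _ e)))) as E4.
  pose proof (eq_sym F11) as E5.
  pose proof (eq_trans (f_equal2 mul E3 (@eq_refl _ e)) (eq_sym (f_equal2 mul E3 (@eq_refl _ e)))) as E6.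
  pose proof (eq_trans (f_equal2 mul E3 (@eq_refl _ e)) (eq_sym (f_equal2 mul E2 (@eq_refl _ e)))) as E7.
  pose proof F11 as E8.
  pose proof (eq_trans (eq_trans (f_equal2 (rdiv HQ) E6 (@eq_refl _ (mul e e))) (eq_sym (f_equal2 (rdiv HQ) E4 E5))) (eq_sym (f_equal2 (rdiv HQ) E7 E8))) as E9.
  pose proof (eq_trans (f_equal2 (rdiv HQ) (@eq_refl _ (mul (mul a e) e)) E8) (f_equal2 (rdiv HQ) (@eq_refl _ (mul (mul a e) e)) E5)) as E10.
  pose proof F6 as E11.
  pose proof (eq_trans (f_equal2 mul E11 (@eq_refl _ e)) F11) as E12.
  pose proof (eq_trans (f_equal2 mul (@eq_refl _ e) E11) (eq_sym (f_equal2 mul E12 (@eq_refl _ e)))) as E13.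
  pose proof (eq_trans F6 (eq_sym F11)) as E14.
  pose proof (eq_trans (eq_trans (eq_trans (eq_trans (eq_trans (f_equal2 mul E9 E10) (eq_sym F12)) (eq_sym (f_equal2 (rdiv HQ) E13 E14))) (eq_sym (eq_sym F1))) (eq_sym F11)) (eq_sym (f_equal2 mul E11 (@eq_refl _ e)))) as E15.
  pose proof (eq_trans (f_equal2 (rdiv HQ) (@eq_refl _ (mul (mul a e) e)) E8) (eq_sym (eq_sym F5))) as E16.
  pose proof (eq_trans (eq_trans (eq_trans (eq_trans (eq_trans (eq_sym (f_equal2 (rdiv HQ) E15 E16)) (eq_sym (eq_sym F3))) (eq_sym (f_equal2 (rdiv HQ) E4 E5))) (eq_sym (eq_sym F2))) (eq_sym (f_equal2 mul E1 (@eq_refl _ x)))) (eq_sym (eq_sym F7))) as E17.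
  pose proof (eq_trans (eq_trans (eq_trans (eq_trans (eq_trans (eq_sym F7) (f_equal2 mul E1 (@eq_refl _ x))) (eq_sym F2)) (f_equal2 (rdiv HQ) E4 E5)) (eq_sym F3)) (f_equal2 (rdiv HQ) E15 E16)) as E18.
  pose proof (eq_sym (f_equal2 mul E18 E18)) as E19.
  pose proof (eq_trans (eq_trans (eq_trans (eq_trans (eq_trans (eq_trans (eq_trans (eq_sym F7) (f_equal2 mul E1 (@eq_refl _ x))) (eq_sym F2)) (f_equal2 (rdiv HQ) E4 E5)) (eq_sym F3)) (f_equal2 (rdiv HQ) E15 E16)) (eq_sym F4)) (f_equal2 (ldiv HQ) E17 E19)) as E20.
  pose proof (eq_trans (eq_sym F7) (f_equal2 mul E1 (@eq_refl _ x))) as E21.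
  pose proof (eq_trans (eq_trans (eq_trans (eq_sym (f_equal2 mul E1 (@eq_refl _ x))) (eq_sym (eq_sym F7))) (eq_sym F0)) (eq_sym (f_equal2 mul E2 (@eq_refl _ e)))) as E22.
  pose proof (eq_trans (eq_trans (eq_trans (eq_trans (eq_sym F8) (f_equal2 mul E20 (@eq_refl _ (ldiv HQ x (mul a x))))) (eq_sym F10)) (f_equal2 (ldiv HQ) E21 E22)) F9) as E23.
  exact E23.
Qed.

Lemma pp {T mul e} (HQ : automorphic_loop T mul e) x a w :
  mul x a = e -> mul a x = e -> mul (mul w x) a = mul a (mul x w).
Proof. intros Hxa Hax.
  pose proof (d1 HQ (mul x w) (mul x (mul a x))) as F0.
  pose proof (autR HQ e x w x) as F1.
  pose proof (d2 HQ a (mul (mul x a) a)) as F2.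
  pose proof (autR HQ a (mul x w) (mul w x) w) as F3.
  pose proof (d3 HQ x (mul x (mul x a))) as F4.
  pose proof (autR HQ e x (mul x w) x) as F5.
  pose proof (autT HQ a a x) as F6.
  pose proof (idr HQ x) as F7.
  pose proof (d4 HQ (mul (mul (mul x w) e) x) (mul e x)) as F8.
  pose proof (d2 HQ w (mul (mul w x) w)) as F9.
  pose proof (idl HQ x) as F10.
  pose proof (d1 HQ (rdiv HQ (mul (mul x a) (mul x w)) (mul a (mul x w))) (rdiv HQ (mul (mul w a) (mul x w)) (mul a (mul x w)))) as F11.
  pose proof (d1 HQ (mul x w) (mul x w)) as F12.
  pose proof (d3 HQ (rdiv HQ (mul (mul w x) e) (mul x e)) (rdiv HQ (mul (mul a x) e) (mul x e))) as F13.
  pose proof (d4 HQ (mul (mul (mul w x) a) (mul x w)) (mul a (mul x w))) as F14.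
  pose proof (d1 HQ w w) as F15.
  pose proof (autR HQ e a w x) as F16.
  pose proof (d1 HQ x (mul e (mul x w))) as F17.
  pose proof (autR HQ e x a x) as F18.
  pose proof (autT HQ x (mul x w) a) as F19.
  pose proof (d3 HQ (rdiv HQ (mul (mul (mul w x) x) e) (mul x e)) (rdiv HQ (mul (mul a x) e) (mul x e))) as F20.
  pose proof (d2 HQ (mul x w) (mul (mul x (mul w a)) (mul x w))) as F21.
  pose proof (d1 HQ (mul x w) (mul a x)) as F22.
  pose proof (d2 HQ x (mul w x)) as F23.
  pose proof (d1 HQ (rdiv HQ (mul (mul x a) (mul x w)) (mul a (mul x w))) (mul a (mul x w))) as F24.
  pose proof (autR HQ a (mul x w) w (mul x w)) as F25.
  pose proof (d3 HQ a x) as F26.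
  pose proof (autL HQ e x x w) as F27.
  pose proof (d3 HQ (mul x w) (mul a (mul x w))) as F28.
  pose proof (d1 HQ x a) as F29.
  pose proof (autR HQ x e w x) as F30.
  pose proof (autR HQ e x x w) as F31.
  pose proof (d3 HQ (mul a e) x) as F32.
  pose proof (autT HQ x x (mul w a)) as F33.
  pose proof (d3 HQ (mul (mul w x) e) x) as F34.
  pose proof (d4 HQ (mul (mul x a) (mul x w)) (mul a (mul x w))) as F35.
  pose proof (d2 HQ x (mul (mul x w) x)) as F36.
  pose proof (autR HQ x e x w) as F37.
  pose proof (d3 HQ (mul (mul x w) e) a) as F38.
  pose proof (d3 HQ (rdiv HQ (mul (mul w a) (mul x w)) (mul a (mul x w))) (rdiv HQ (mul (mul (mul x w) a) (mul x w)) (mul a (mul x w)))) as F39.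
  pose proof Hxa as F40.
  pose proof (d2 HQ (mul x e) (mul x (mul e w))) as F41.
  pose proof (d1 HQ a x) as F42.
  pose proof (d2 HQ (mul x w) (mul a (mul x w))) as F43.
  pose proof (d2 HQ x (mul (mul w a) x)) as F44.
  pose proof (autR HQ a (mul x w) x w) as F45.
  pose proof (d3 HQ (mul w e) x) as F46.
  pose proof (d2 HQ w (mul x w)) as F47.
  pose proof (d1 HQ (rdiv HQ (mul (mul a e) x) (mul e x)) (rdiv HQ (mul (mul a e) x) (mul e x))) as F48.
  pose proof (d1 HQ (rdiv HQ (mul (mul w e) a) (mul e a)) (rdiv HQ (mul (mul x e) a) (mul e a))) as F49.
  pose proof (d3 HQ (mul (mul x a) e) x) as F50.
  pose proof (d2 HQ (mul x w) (mul x (mul w a))) as F51.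
  pose proof (d3 HQ (mul (mul w a) x) (mul x w)) as F52.
  pose proof (d3 HQ (rdiv HQ (mul (mul x x) e) (mul x e)) (rdiv HQ (mul (mul w x) e) (mul x e))) as F53.
  pose proof (d3 HQ e (mul x (mul x a))) as F54.
  pose proof (autL HQ w x a x) as F55.
  pose proof (autR HQ e a x w) as F56.
  pose proof Hax as F57.
  pose proof (autT HQ w w x) as F58.
  pose proof (autR HQ x e a x) as F59.
  pose proof (autT HQ (mul x w) (mul x w) a) as F60.
  pose proof (d3 HQ x (mul w (mul x a))) as F61.
  pose proof (idl HQ w) as F62.
  pose proof (d1 HQ (mul w e) x) as F63.
  pose proof (d3 HQ (mul (mul (mul x w) x) e) x) as F64.
  pose proof (d1 HQ (rdiv HQ (mul (mul x e) x) (mul e x)) (rdiv HQ (mul (mul x e) x) (mul e x))) as F65.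
  pose proof (d3 HQ (ldiv HQ (mul x w) (mul x (mul w a))) (ldiv HQ (mul x w) (mul x (mul w x)))) as F66.
  pose proof (autT HQ x x w) as F67.
  pose proof (eq_sym F7) as E1.
  pose proof F10 as E2.
  pose proof (eq_sym (eq_sym F7)) as E3.
  pose proof (eq_trans (eq_sym (f_equal2 mul E3 (@eq_refl _ x))) (eq_sym (f_equal2 mul E1 E2))) as E4.
  pose proof F40 as E5.
  pose proof (eq_trans (f_equal2 mul (@eq_refl _ x) E5) (eq_sym (eq_sym F7))) as E6.
  pose proof (eq_sym (f_equal2 mul E1 E6)) as E7.
  pose proof (eq_trans (eq_trans F10 (eq_sym F7)) (eq_sym (f_equal2 mul (@eq_refl _ x) E5))) as E8.
  pose proof (eq_trans (eq_trans (eq_sym (eq_sym F7)) (eq_sym F4)) (eq_sym (f_equal2 (rdiv HQ) E7 E8))) as E9.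
  pose proof (eq_trans (eq_trans (f_equal2 (rdiv HQ) E7 E8) F4) (eq_sym F7)) as E10.
  pose proof (eq_trans (f_equal2 (rdiv HQ) E7 E8) F4) as E11.
  pose proof (eq_trans (f_equal2 mul E1 E2) (eq_sym (f_equal2 mul E10 E11))) as E12.
  pose proof (eq_trans (eq_trans (eq_trans (eq_trans (eq_sym F4) (eq_sym (f_equal2 (rdiv HQ) E7 E8))) (eq_sym F65)) (eq_sym (f_equal2 (ldiv HQ) E9 E12))) (eq_sym (f_equal2 (ldiv HQ) E1 E4))) as E13.
  pose proof (eq_trans (eq_trans (eq_sym F23) (f_equal2 mul E13 (@eq_refl _ (ldiv HQ x (mul w x))))) (eq_sym F67)) as E14.
  pose proof (eq_trans (eq_sym (eq_sym F57)) (eq_sym F40)) as E15.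
  pose proof (eq_trans (eq_sym F29) (eq_sym (f_equal2 (ldiv HQ) (@eq_refl _ x) E15))) as E16.
  pose proof (eq_trans (eq_sym F4) (eq_sym (f_equal2 (rdiv HQ) E7 E8))) as E17.
  pose proof (eq_sym (eq_sym F57)) as E18.
  pose proof (eq_trans (eq_trans (f_equal2 mul (@eq_refl _ w) E18) (eq_sym F46)) (eq_sym (f_equal2 (rdiv HQ) (@eq_refl _ (mul (mul w e) x)) E2))) as E19.
  pose proof (eq_trans (f_equal2 mul E3 (@eq_refl _ a)) (eq_sym (f_equal2 mul E3 (@eq_refl _ a)))) as E20.
  pose proof (eq_trans (f_equal2 mul E3 (@eq_refl _ a)) (eq_sym (f_equal2 mul E3 (@eq_refl _ a)))) as E21.
  pose proof (eq_sym F10) as E22.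
  pose proof (eq_trans (f_equal2 (rdiv HQ) (@eq_refl _ (mul (mul w e) x)) E2) (eq_sym (eq_sym F46))) as E23.
  pose proof (eq_trans (eq_trans (eq_trans (eq_sym (f_equal2 mul E23 E11)) (eq_sym F1)) (eq_sym (f_equal2 (rdiv HQ) (@eq_refl _ (mul (mul (mul w x) e) x)) E22))) (eq_sym (eq_sym F34))) as E24.
  pose proof (eq_trans (eq_sym F46) (f_equal2 (rdiv HQ) E24 E1)) as E25.
  pose proof (eq_trans (f_equal2 mul E15 (@eq_refl _ e)) (eq_sym (f_equal2 mul E15 (@eq_refl _ e)))) as E26.
  pose proof (f_equal2 mul E15 (@eq_refl _ e)) as E27.
  pose proof (eq_sym (f_equal2 mul E27 (@eq_refl _ x))) as E28.
  pose proof (eq_trans (f_equal2 (rdiv HQ) (@eq_refl _ (mul (mul a e) x)) E2) (eq_sym (eq_sym F32))) as E29.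
  pose proof (eq_trans (eq_trans (eq_trans (eq_trans (eq_sym (f_equal2 mul E29 E11)) (eq_sym F18)) (eq_sym (f_equal2 (rdiv HQ) E28 E22))) (eq_sym (eq_sym F50))) (eq_sym (f_equal2 mul E15 (@eq_refl _ e)))) as E30.
  pose proof (eq_trans (eq_trans (eq_sym F32) (f_equal2 (rdiv HQ) E30 E1)) (f_equal2 (rdiv HQ) E26 (@eq_refl _ (mul x e)))) as E31.
  pose proof (eq_trans (f_equal2 mul E1 (@eq_refl _ x)) (eq_sym (f_equal2 mul E1 (@eq_refl _ x)))) as E32.
  pose proof (eq_sym (f_equal2 mul E32 (@eq_refl _ e))) as E33.
  pose proof (eq_trans (f_equal2 mul E1 (@eq_refl _ x)) (eq_sym (f_equal2 mul E1 (@eq_refl _ x)))) as E34.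
  pose proof (eq_sym (f_equal2 mul E34 (@eq_refl _ e))) as E35.
  pose proof (eq_trans (f_equal2 mul E1 (@eq_refl _ x)) (eq_sym (f_equal2 mul E1 (@eq_refl _ x)))) as E36.
  pose proof (f_equal2 mul E36 (@eq_refl _ e)) as E37.
  pose proof (eq_trans (f_equal2 mul E1 (@eq_refl _ x)) (eq_sym (f_equal2 mul E1 (@eq_refl _ x)))) as E38.
  pose proof (f_equal2 mul E38 (@eq_refl _ e)) as E39.
  pose proof (eq_trans (f_equal2 (rdiv HQ) E37 (@eq_refl _ (mul x e))) (eq_sym (f_equal2 (rdiv HQ) E39 (@eq_refl _ (mul x e))))) as E40.
  pose proof (eq_trans (eq_trans F10 (eq_sym F4)) (eq_sym (f_equal2 (rdiv HQ) E7 E8))) as E41.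
  pose proof (eq_trans (eq_trans (eq_trans (eq_trans (eq_sym F64) (eq_sym (f_equal2 (rdiv HQ) (@eq_refl _ (mul (mul (mul (mul x w) x) e) x)) E2))) (eq_sym (eq_sym F5))) (eq_sym (f_equal2 mul (@eq_refl _ (rdiv HQ (mul (mul (mul x w) e) x) (mul e x))) E41))) (eq_sym (eq_sym F8))) as E42.
  pose proof (eq_trans (eq_sym (eq_sym F7)) (eq_sym F10)) as E43.
  pose proof (eq_trans (eq_trans (f_equal2 mul (@eq_refl _ w) E5) (eq_sym F46)) (eq_sym (f_equal2 (rdiv HQ) (@eq_refl _ (mul (mul w e) x)) E2))) as E44.
  pose proof (eq_trans (eq_trans (eq_trans (eq_trans (f_equal2 mul E40 (@eq_refl _ (rdiv HQ (mul (mul w x) e) (mul x e)))) (eq_sym F37)) (f_equal2 (rdiv HQ) E42 E43)) F31) (eq_sym (f_equal2 mul E17 E44))) as E45.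
  pose proof (eq_trans (eq_trans (eq_sym (f_equal2 (rdiv HQ) E24 E1)) (eq_sym (eq_sym F46))) (eq_sym (f_equal2 mul (@eq_refl _ w) E5))) as E46.
  pose proof (eq_trans (eq_trans (eq_trans (eq_trans (eq_sym F61) (eq_sym (f_equal2 (rdiv HQ) E45 E46))) (eq_sym (eq_sym F53))) (eq_sym (f_equal2 (rdiv HQ) E35 (@eq_refl _ (mul x e))))) (eq_sym (f_equal2 (rdiv HQ) E33 (@eq_refl _ (mul x e))))) as E47.
  pose proof (eq_trans (f_equal2 mul E18 (@eq_refl _ x)) F10) as E48.
  pose proof (eq_trans (f_equal2 mul (@eq_refl _ x) E5) (eq_sym (eq_sym F7))) as E49.
  pose proof (eq_trans (eq_trans (eq_trans (f_equal2 mul E48 (@eq_refl _ e)) (eq_sym (eq_sym F7))) (eq_sym F10)) (eq_sym (f_equal2 mul (@eq_refl _ e) E49))) as E50.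
  pose proof (eq_sym (f_equal2 mul (@eq_refl _ x) E5)) as E51.
  pose proof (eq_trans (eq_trans (eq_trans (eq_trans (eq_trans (eq_trans (eq_trans (eq_trans (eq_trans (f_equal2 mul E15 (@eq_refl _ e)) (eq_sym F50)) (f_equal2 (rdiv HQ) E28 E22)) F18) (f_equal2 mul E29 E11)) (f_equal2 mul E31 E47)) (eq_sym F59)) (f_equal2 (rdiv HQ) E50 E51)) F54) (eq_sym F57)) as E52.
  pose proof (eq_trans (eq_trans (eq_sym F26) (eq_sym (f_equal2 (rdiv HQ) E52 E3))) (eq_sym (f_equal2 (rdiv HQ) E26 (@eq_refl _ (mul x e))))) as E53.
  pose proof (eq_sym (f_equal2 mul E25 E53)) as E54.
  pose proof (eq_sym F40) as E55.
  pose proof (eq_trans (eq_sym (f_equal2 mul E55 (@eq_refl _ a))) (eq_sym (f_equal2 mul E18 (@eq_refl _ a)))) as E56.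
  pose proof (eq_trans (eq_trans (eq_trans (eq_trans (eq_sym F26) (eq_sym (f_equal2 (rdiv HQ) E52 E3))) (eq_sym (f_equal2 (rdiv HQ) E26 (@eq_refl _ (mul x e))))) (eq_sym (f_equal2 (rdiv HQ) E30 E1))) (eq_sym (f_equal2 (rdiv HQ) (@eq_refl _ (mul (mul a e) x)) E2))) as E57.
  pose proof (f_equal2 mul E57 E57) as E58.
  pose proof (eq_trans (eq_trans (eq_trans (eq_trans (eq_trans (eq_trans (eq_sym F26) (eq_sym (f_equal2 (rdiv HQ) E52 E3))) (eq_sym (f_equal2 (rdiv HQ) E26 (@eq_refl _ (mul x e))))) (eq_sym (f_equal2 (rdiv HQ) E30 E1))) (eq_sym (f_equal2 (rdiv HQ) (@eq_refl _ (mul (mul a e) x)) E2))) (eq_sym F48)) (eq_sym (f_equal2 (ldiv HQ) E57 E58))) as E59.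
  pose proof (eq_trans F40 (eq_sym F57)) as E60.
  pose proof (eq_trans (eq_sym F42) (eq_sym (f_equal2 (ldiv HQ) (@eq_refl _ a) E60))) as E61.
  pose proof (eq_trans (eq_trans (eq_trans (f_equal2 (ldiv HQ) (@eq_refl _ a) E56) F6) (eq_sym (f_equal2 mul E59 E61))) (eq_sym (eq_sym F57))) as E62.
  pose proof (eq_trans (eq_trans (eq_trans (eq_trans (eq_sym (f_equal2 (rdiv HQ) E30 E1)) (eq_sym (eq_sym F32))) (eq_sym (f_equal2 mul (@eq_refl _ a) E62))) (eq_sym (eq_sym F2))) (eq_sym (f_equal2 mul E55 (@eq_refl _ a)))) as E63.
  pose proof (eq_trans (eq_trans (eq_trans (eq_sym (f_equal2 (rdiv HQ) E54 E63)) (eq_sym (eq_sym F13))) (eq_sym (f_equal2 (rdiv HQ) E24 E1))) (eq_sym (eq_sym F46))) as E64.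
  pose proof (eq_trans (eq_trans (eq_trans (eq_sym F61) (eq_sym (f_equal2 (rdiv HQ) E45 E46))) (eq_sym (eq_sym F53))) (eq_sym (f_equal2 (rdiv HQ) E35 (@eq_refl _ (mul x e))))) as E65.
  pose proof (eq_trans (eq_trans (eq_trans (eq_trans (eq_trans (eq_sym F34) (f_equal2 (rdiv HQ) (@eq_refl _ (mul (mul (mul w x) e) x)) E22)) F1) (f_equal2 mul E23 E11)) (f_equal2 mul E25 E65)) (eq_sym F30)) as E66.
  pose proof (eq_sym (f_equal2 mul E66 E53)) as E67.
  pose proof (eq_trans (f_equal2 mul E3 (@eq_refl _ a)) (eq_sym (f_equal2 mul E3 (@eq_refl _ a)))) as E68.
  pose proof (eq_sym (f_equal2 (rdiv HQ) E68 (@eq_refl _ (mul e a)))) as E69.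
  pose proof (eq_trans (eq_trans (eq_trans (eq_trans (eq_trans (eq_sym (f_equal2 mul (@eq_refl _ (rdiv HQ (mul (mul w e) a) (mul e a))) E69)) (eq_sym F16)) (eq_sym (f_equal2 (rdiv HQ) E67 E63))) (eq_sym (eq_sym F20))) (eq_sym (eq_sym F30))) (eq_sym (f_equal2 mul E25 E65))) as E70.
  pose proof (eq_trans (eq_trans (eq_trans (eq_trans (eq_trans (eq_trans (f_equal2 (rdiv HQ) E7 E8) F4) (eq_sym F63)) (eq_sym (f_equal2 (ldiv HQ) E64 E70))) (eq_sym (eq_sym F49))) (eq_sym (f_equal2 (rdiv HQ) E21 (@eq_refl _ (mul e a))))) (eq_sym (f_equal2 (rdiv HQ) E20 (@eq_refl _ (mul e a))))) as E71.
  pose proof (eq_trans (eq_trans (eq_trans (f_equal2 (rdiv HQ) (@eq_refl _ (mul (mul w e) x)) E2) (f_equal2 (rdiv HQ) E24 E1)) (eq_sym F13)) (f_equal2 (rdiv HQ) E54 E63)) as E72.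
  pose proof (eq_trans (eq_trans (eq_trans (eq_trans (eq_trans (eq_trans (eq_trans (eq_sym F26) (eq_sym (f_equal2 (rdiv HQ) E52 E3))) (eq_sym (f_equal2 (rdiv HQ) E26 (@eq_refl _ (mul x e))))) (eq_sym (f_equal2 (rdiv HQ) E30 E1))) (eq_sym (eq_sym F32))) (eq_sym (f_equal2 mul (@eq_refl _ a) E62))) (eq_sym (eq_sym F2))) (eq_sym (f_equal2 mul E55 (@eq_refl _ a)))) as E73.
  pose proof (eq_trans (eq_trans (eq_trans (eq_trans (eq_trans (f_equal2 mul E17 E19) (f_equal2 mul E71 E72)) (eq_sym F56)) (eq_sym (f_equal2 (rdiv HQ) (@eq_refl _ (mul (mul (mul x w) e) a)) E73))) (eq_sym (eq_sym F38))) (eq_sym (f_equal2 mul (@eq_refl _ (mul x w)) E18))) as E74.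
  pose proof (eq_trans (eq_trans (eq_sym F22) (eq_sym (f_equal2 (ldiv HQ) (@eq_refl _ (mul x w)) E74))) (eq_sym (eq_sym F55))) as E75.
  pose proof (eq_sym F57) as E76.
  pose proof (eq_trans (eq_sym F7) (f_equal2 mul (@eq_refl _ x) E76)) as E77.
  pose proof (eq_trans (eq_trans (eq_sym (f_equal2 mul (@eq_refl _ (mul x w)) E77)) (eq_sym F36)) (eq_sym (f_equal2 mul (@eq_refl _ x) E14))) as E78.
  pose proof (eq_trans (eq_trans (eq_trans (eq_sym F7) (f_equal2 mul (@eq_refl _ x) E76)) (eq_sym F0)) (f_equal2 (ldiv HQ) (@eq_refl _ (mul x w)) E78)) as E79.
  pose proof (eq_trans (eq_trans (eq_sym F26) (f_equal2 (rdiv HQ) E75 E79)) F66) as E80.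
  pose proof (eq_trans (eq_sym F51) (eq_sym (f_equal2 mul (@eq_refl _ (mul x w)) E80))) as E81.
  pose proof (eq_sym (f_equal2 mul E81 (@eq_refl _ x))) as E82.
  pose proof (eq_trans (f_equal2 mul E5 (@eq_refl _ (mul x w))) (f_equal2 mul E55 (@eq_refl _ (mul x w)))) as E83.
  pose proof (f_equal2 (rdiv HQ) E83 (@eq_refl _ (mul a (mul x w)))) as E84.
  pose proof (f_equal2 mul E81 (@eq_refl _ (mul x w))) as E85.
  pose proof F12 as E86.
  pose proof (eq_trans (eq_trans (eq_trans (eq_sym F43) (eq_sym (f_equal2 mul E86 (@eq_refl _ (ldiv HQ (mul x w) (mul a (mul x w))))))) (eq_sym F60)) (eq_sym (f_equal2 (ldiv HQ) (@eq_refl _ (mul x w)) E85))) as E87.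
  pose proof (eq_trans (eq_trans (eq_sym (f_equal2 mul E81 (@eq_refl _ (mul x w)))) (eq_sym F21)) (eq_sym (f_equal2 mul (@eq_refl _ (mul x w)) E87))) as E88.
  pose proof (eq_sym F62) as E89.
  pose proof (eq_trans (eq_trans (eq_trans (eq_trans (eq_sym (eq_sym F7)) (eq_sym F4)) (eq_sym (f_equal2 (rdiv HQ) E7 E8))) (eq_sym F65)) (eq_sym (f_equal2 (ldiv HQ) E9 E12))) as E90.
  pose proof (eq_trans (eq_trans (eq_trans (eq_trans (eq_trans (eq_trans (eq_trans (eq_trans (eq_trans (eq_trans (eq_trans F35 (f_equal2 mul E5 (@eq_refl _ (mul x w)))) (eq_sym F17)) (eq_sym (f_equal2 (ldiv HQ) E3 (@eq_refl _ (mul x (mul e (mul x w))))))) (eq_sym (eq_sym F27))) (eq_sym (f_equal2 mul E90 (@eq_refl _ (ldiv HQ (mul x e) (mul x (mul e w))))))) (eq_sym (eq_sym F41))) (eq_sym (f_equal2 mul (@eq_refl _ x) E89))) (eq_sym F28)) (eq_sym (f_equal2 (rdiv HQ) E88 (@eq_refl _ (mul a (mul x w)))))) (eq_sym (eq_sym F45))) (eq_sym (f_equal2 mul E84 (@eq_refl _ (rdiv HQ (mul (mul w a) (mul x w)) (mul a (mul x w))))))) as E91.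
  pose proof (eq_trans (f_equal2 mul E1 (@eq_refl _ x)) (eq_sym (f_equal2 mul E1 E2))) as E92.
  pose proof (eq_trans (eq_trans (eq_trans (eq_trans (eq_sym F4) (eq_sym (f_equal2 (rdiv HQ) E7 E8))) (eq_sym F65)) (eq_sym (f_equal2 (ldiv HQ) E9 E12))) (eq_sym (f_equal2 (ldiv HQ) E1 E92))) as E93.
  pose proof (eq_trans (eq_trans (eq_trans (eq_trans (eq_trans (eq_sym F44) (f_equal2 mul E93 (@eq_refl _ (ldiv HQ x (mul (mul w a) x))))) (eq_sym F33)) (eq_sym (f_equal2 (ldiv HQ) (@eq_refl _ x) E82))) (eq_sym (eq_sym F19))) (eq_sym (f_equal2 mul E14 E16))) as E94.
  pose proof (eq_trans (eq_trans (eq_sym F24) (f_equal2 (ldiv HQ) (@eq_refl _ (rdiv HQ (mul (mul x a) (mul x w)) (mul a (mul x w)))) E91)) F11) as E95.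
  pose proof F15 as E96.
  pose proof (eq_trans (eq_trans (eq_sym F47) (eq_sym (f_equal2 mul E96 (@eq_refl _ (ldiv HQ w (mul x w)))))) (eq_sym F58)) as E97.
  pose proof (eq_trans (eq_sym F9) (eq_sym (f_equal2 mul (@eq_refl _ w) E97))) as E98.
  pose proof (eq_sym (f_equal2 mul E98 (@eq_refl _ a))) as E99.
  pose proof (eq_sym (f_equal2 mul E99 (@eq_refl _ (mul x w)))) as E100.
  pose proof (eq_trans (eq_trans (eq_trans (eq_trans (eq_trans (eq_sym F25) (eq_sym (f_equal2 (rdiv HQ) E100 (@eq_refl _ (mul a (mul x w)))))) (eq_sym (eq_sym F3))) (eq_sym (f_equal2 mul (@eq_refl _ (rdiv HQ (mul (mul (mul w x) a) (mul x w)) (mul a (mul x w)))) E95))) (eq_sym (eq_sym F14))) (eq_sym (f_equal2 mul E94 (@eq_refl _ (mul x w))))) as E101.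
  pose proof (eq_trans (f_equal2 (rdiv HQ) E88 (@eq_refl _ (mul a (mul x w)))) F28) as E102.
  pose proof (eq_trans (eq_trans (eq_trans (eq_trans (eq_trans (eq_trans (eq_trans (eq_trans (eq_trans (eq_trans (eq_trans (f_equal2 mul E14 E16) (eq_sym F19)) (f_equal2 (ldiv HQ) (@eq_refl _ x) E82)) F33) (eq_sym (f_equal2 mul E93 (@eq_refl _ (ldiv HQ x (mul (mul w a) x)))))) (eq_sym (eq_sym F44))) (eq_sym F52)) (eq_sym (f_equal2 (rdiv HQ) E101 E102))) (eq_sym (eq_sym F39))) (eq_sym F11)) (eq_sym (f_equal2 (ldiv HQ) (@eq_refl _ (rdiv HQ (mul (mul x a) (mul x w)) (mul a (mul x w)))) E91))) (eq_sym (eq_sym F24))) as E103.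
  exact E103.
Qed.

Lemma f2 {T mul e} (HQ : automorphic_loop T mul e) x a w :
  mul x a = e -> mul a x = e -> mul x (mul a w) = mul a (mul x w).
Proof. intros Hxa Hax.
  pose proof (d3 HQ e (mul a (mul x a))) as F0.
  pose proof (d1 HQ (mul a x) a) as F1.
  pose proof Hax as F2.
  pose proof (autT HQ a a a) as F3.
  pose proof (autR HQ a e a x) as F4.
  pose proof (d2 HQ (mul x a) (mul x (mul a w))) as F5.
  pose proof Hxa as F6.
  pose proof (d2 HQ (mul a x) (mul a (mul x (mul x w)))) as F7.
  pose proof (idl HQ (ldiv HQ (mul x a) (mul x (mul a x)))) as F8.
  pose proof (d1 HQ a x) as F9.
  pose proof (d1 HQ x (mul a (mul x a))) as F10.
  pose proof (d1 HQ a (mul a (mul x a))) as F11.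
  pose proof (autL HQ x a x w) as F12.
  pose proof (idl HQ (ldiv HQ (mul a x) (mul a (mul x (mul x w))))) as F13.
  pose proof (d3 HQ (ldiv HQ (mul a x) (mul a (mul x x))) (ldiv HQ (mul a x) (mul a (mul x a)))) as F14.
  pose proof (autL HQ x a x a) as F15.
  pose proof (idr HQ (ldiv HQ a (mul (mul a a) a))) as F16.
  pose proof (autL HQ a x x w) as F17.
  pose proof (d1 HQ (rdiv HQ (mul (mul a a) e) (mul a e)) (rdiv HQ (mul (mul x a) e) (mul a e))) as F18.
  pose proof (d1 HQ x (mul a (mul x w))) as F19.
  pose proof (d2 HQ x (mul (mul a x) x)) as F20.
  pose proof (d3 HQ a (mul a (mul x a))) as F21.
  pose proof (d1 HQ (mul (mul a x) e) x) as F22.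
  pose proof (idl HQ (mul a x)) as F23.
  pose proof (idl HQ (ldiv HQ (mul a x) (mul a (mul x w)))) as F24.
  pose proof (idl HQ (ldiv HQ (mul e e) (mul e (mul e a)))) as F25.
  pose proof (d2 HQ (mul a x) (mul a (mul x w))) as F26.
  pose proof (d1 HQ x x) as F27.
  pose proof (d1 HQ x (mul x (mul a w))) as F28.
  pose proof (autT HQ x a x) as F29.
  pose proof (idl HQ (ldiv HQ (mul x a) (mul x (mul a w)))) as F30.
  pose proof (idr HQ (mul (mul a x) a)) as F31.
  pose proof (idl HQ (mul (mul a x) a)) as F32.
  pose proof (autT HQ e a x) as F33.
  pose proof F6 as E1.
  pose proof (eq_trans (f_equal2 mul (@eq_refl _ a) E1) (eq_sym (f_equal2 mul (@eq_refl _ a) E1))) as E2.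
  pose proof (eq_sym (eq_sym F2)) as E3.
  pose proof (eq_sym F6) as E4.
  pose proof (eq_trans (f_equal2 mul E4 (@eq_refl _ e)) (eq_sym (f_equal2 mul E4 (@eq_refl _ e)))) as E5.
  pose proof (eq_sym F2) as E6.
  pose proof (eq_trans (f_equal2 mul E6 (@eq_refl _ a)) (eq_sym (f_equal2 mul E6 (@eq_refl _ a)))) as E7.
  pose proof (eq_sym (f_equal2 mul (@eq_refl _ e) E7)) as E8.
  pose proof (eq_trans (eq_trans (f_equal2 mul E4 (@eq_refl _ e)) (f_equal2 mul E1 E6)) F23) as E9.
  pose proof (f_equal2 mul E6 (@eq_refl _ a)) as E10.
  pose proof (eq_trans (eq_trans (f_equal2 mul (@eq_refl _ e) E7) (f_equal2 mul (@eq_refl _ e) E10)) F32) as E11.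
  pose proof (eq_trans (eq_trans (eq_sym F1) (eq_sym (f_equal2 (ldiv HQ) E9 E11))) (eq_sym (f_equal2 (ldiv HQ) E5 E8))) as E12.
  pose proof (eq_trans (eq_trans (eq_trans (eq_sym F1) (eq_sym (f_equal2 (ldiv HQ) E9 E11))) (eq_sym F25)) (eq_sym (f_equal2 mul E3 E12))) as E13.
  pose proof (eq_trans (eq_trans (eq_trans (eq_trans (eq_trans (eq_trans (f_equal2 mul (@eq_refl _ a) E1) (f_equal2 mul E13 (@eq_refl _ e))) F31) (f_equal2 mul E3 E12)) F25) (f_equal2 (ldiv HQ) E9 E11)) (eq_sym (eq_sym F1))) as E14.
  pose proof (eq_trans (eq_sym (f_equal2 mul (@eq_refl _ a) E14)) (eq_sym (f_equal2 mul (@eq_refl _ a) E2))) as E15.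
  pose proof (eq_trans (eq_trans (eq_trans (eq_trans (eq_trans (eq_trans (eq_trans (eq_trans (eq_sym F1) (eq_sym (f_equal2 (ldiv HQ) E9 E11))) (eq_sym F25)) (eq_sym (f_equal2 mul E3 E12))) (eq_sym F31)) (eq_sym (f_equal2 mul E13 (@eq_refl _ e)))) (eq_sym (f_equal2 mul (@eq_refl _ a) E1))) (eq_sym F11)) (eq_sym (f_equal2 (ldiv HQ) (@eq_refl _ a) E15))) as E16.
  pose proof (eq_trans (f_equal2 mul E16 E16) (eq_sym F3)) as E17.
  pose proof (eq_trans (eq_trans (eq_trans (eq_trans (f_equal2 mul E17 (@eq_refl _ e)) F16) F3) (eq_sym (f_equal2 mul E16 E16))) (eq_sym (f_equal2 mul (@eq_refl _ a) E14))) as E18.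
  pose proof (eq_sym (f_equal2 mul (@eq_refl _ a) E1)) as E19.
  pose proof (eq_trans (eq_sym F21) (eq_sym (f_equal2 (rdiv HQ) E18 E19))) as E20.
  pose proof (eq_trans (eq_trans (eq_trans (eq_trans (eq_trans (eq_trans (f_equal2 mul (@eq_refl _ a) E1) (f_equal2 mul E13 (@eq_refl _ e))) F31) (f_equal2 mul E3 E12)) F25) (f_equal2 (ldiv HQ) E9 E11)) (eq_sym (eq_sym F1))) as E21.
  pose proof (eq_trans F31 (eq_sym (f_equal2 mul E6 E21))) as E22.
  pose proof (eq_sym (f_equal2 mul (@eq_refl _ a) E1)) as E23.
  pose proof (eq_trans (eq_trans (eq_trans (eq_sym (eq_sym F2)) (eq_sym F0)) (eq_sym (f_equal2 (rdiv HQ) E22 E23))) (eq_sym (eq_sym F4))) as E24.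
  pose proof (eq_trans (eq_sym F31) (eq_sym (f_equal2 mul E13 (@eq_refl _ e)))) as E25.
  pose proof (eq_trans (eq_sym F1) (f_equal2 (ldiv HQ) E3 E25)) as E26.
  pose proof (eq_trans (eq_sym (eq_sym F2)) (eq_sym F6)) as E27.
  pose proof (eq_trans (eq_trans (eq_trans (eq_sym F2) (eq_sym F23)) (eq_sym (f_equal2 mul E1 E6))) (eq_sym (f_equal2 mul E27 (@eq_refl _ e)))) as E28.
  pose proof (eq_trans (eq_trans (eq_trans (eq_trans (eq_trans (eq_trans (f_equal2 mul (@eq_refl _ a) E1) (f_equal2 mul E13 (@eq_refl _ e))) F31) (f_equal2 mul E3 E12)) F25) (f_equal2 (ldiv HQ) E9 E11)) (eq_sym (eq_sym F1))) as E29.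
  pose proof (eq_trans (eq_trans (eq_sym (eq_sym F2)) (eq_sym F6)) (eq_sym (f_equal2 mul (@eq_refl _ x) E29))) as E30.
  pose proof (eq_trans (eq_trans (eq_trans (eq_trans (eq_trans (eq_trans (eq_trans (eq_trans (f_equal2 (ldiv HQ) (@eq_refl _ x) E30) F10) (f_equal2 mul (@eq_refl _ a) E1)) (f_equal2 mul E13 (@eq_refl _ e))) F31) (f_equal2 mul E3 E12)) F25) (f_equal2 (ldiv HQ) E9 E11)) (eq_sym (eq_sym F1))) as E31.
  pose proof F27 as E32.
  pose proof (eq_trans (eq_sym (f_equal2 mul E31 E32)) (eq_sym F29)) as E33.
  pose proof (eq_trans (eq_trans (f_equal2 mul E27 (@eq_refl _ e)) (f_equal2 mul E1 E6)) F23) as E34.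
  pose proof (eq_trans (eq_trans (eq_trans (f_equal2 mul (@eq_refl _ x) E6) (f_equal2 mul (@eq_refl _ x) E33)) F20) (eq_sym (f_equal2 mul E34 (@eq_refl _ x)))) as E35.
  pose proof (eq_trans (eq_sym F22) (eq_sym (f_equal2 (ldiv HQ) E28 E35))) as E36.
  pose proof (eq_trans (f_equal2 mul (@eq_refl _ a) E1) (eq_sym (f_equal2 mul (@eq_refl _ a) E1))) as E37.
  pose proof (f_equal2 (ldiv HQ) (@eq_refl _ (mul a x)) E37) as E38.
  pose proof (eq_trans F6 (eq_sym F2)) as E39.
  pose proof (eq_trans (eq_trans (eq_trans (eq_trans F6 (eq_sym F2)) (eq_sym F23)) (eq_sym (f_equal2 mul E1 E6))) (eq_sym (f_equal2 mul E27 (@eq_refl _ e)))) as E40.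
  pose proof (eq_trans (eq_trans (f_equal2 mul (@eq_refl _ x) E33) F20) (eq_sym (f_equal2 mul E34 (@eq_refl _ x)))) as E41.
  pose proof (eq_trans (eq_sym F22) (eq_sym (f_equal2 (ldiv HQ) E40 E41))) as E42.
  pose proof (eq_trans (eq_trans (eq_trans (eq_trans (eq_trans (eq_trans (f_equal2 mul (@eq_refl _ x) E39) (f_equal2 mul (@eq_refl _ x) E33)) F20) (f_equal2 mul E3 E42)) F8) (f_equal2 (ldiv HQ) E40 E41)) F22) as E43.
  pose proof (eq_trans (eq_trans (eq_trans (f_equal2 mul (@eq_refl _ a) E43) (eq_sym F23)) (eq_sym (f_equal2 mul E1 E6))) (eq_sym (f_equal2 mul E27 (@eq_refl _ e)))) as E44.
  pose proof (eq_trans (eq_trans (eq_trans (eq_trans (eq_trans (eq_trans (f_equal2 mul E1 E6) F23) (f_equal2 mul E26 E36)) (eq_sym F33)) (eq_sym (f_equal2 (ldiv HQ) E3 E44))) (eq_sym (eq_sym F15))) (eq_sym (f_equal2 mul (@eq_refl _ (ldiv HQ (mul a x) (mul a (mul x x)))) E38))) as E45.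
  pose proof (eq_trans (f_equal2 mul (@eq_refl _ a) E1) (eq_sym (f_equal2 mul (@eq_refl _ a) E1))) as E46.
  pose proof (eq_trans (eq_trans (f_equal2 mul (@eq_refl _ a) E1) (f_equal2 mul E13 (@eq_refl _ e))) F31) as E47.
  pose proof (eq_trans (eq_trans (eq_trans (eq_trans (eq_trans (eq_trans (eq_trans (f_equal2 mul E13 (@eq_refl _ e)) F31) (f_equal2 mul E3 E12)) F25) (f_equal2 (ldiv HQ) E9 E11)) (eq_sym (f_equal2 (ldiv HQ) (@eq_refl _ (mul a x)) E47))) (eq_sym (f_equal2 (ldiv HQ) (@eq_refl _ (mul a x)) E37))) (eq_sym (f_equal2 (ldiv HQ) (@eq_refl _ (mul a x)) E46))) as E48.
  pose proof (eq_trans (eq_trans (eq_trans (eq_trans (eq_sym F9) (f_equal2 (ldiv HQ) E20 E24)) F18) (f_equal2 (rdiv HQ) E45 E48)) F14) as E49.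
  pose proof (eq_trans (eq_trans (eq_sym F26) (eq_sym (f_equal2 mul E6 (@eq_refl _ (ldiv HQ (mul a x) (mul a (mul x w))))))) (eq_sym (eq_sym F24))) as E50.
  pose proof (eq_trans (eq_trans (eq_trans (eq_trans (eq_sym F7) (f_equal2 mul E3 (@eq_refl _ (ldiv HQ (mul a x) (mul a (mul x (mul x w))))))) F13) (eq_sym (eq_sym F12))) (eq_sym (f_equal2 mul E49 E50))) as E51.
  pose proof (eq_trans (eq_trans (eq_sym F5) (f_equal2 mul E1 (@eq_refl _ (ldiv HQ (mul x a) (mul x (mul a w)))))) F30) as E52.
  pose proof (eq_trans (eq_trans (eq_trans (eq_trans (f_equal2 mul E49 E50) (eq_sym F12)) (f_equal2 (ldiv HQ) E27 E51)) F17) (eq_sym (f_equal2 mul E42 E52))) as E53.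
  pose proof (eq_trans (eq_trans (eq_sym F28) (eq_sym (f_equal2 (ldiv HQ) (@eq_refl _ x) E53))) (eq_sym (eq_sym F19))) as E54.
  exact E54.
Qed.

Lemma id1 {T mul e} (HQ : automorphic_loop T mul e) x a y :
  mul x a = e -> mul a x = e -> mul a (mul x (mul y y)) = mul (mul y x) (mul a y).
Proof. intros Hxa Hax.
  pose proof (autT HQ a a (mul y x)) as F0.
  pose proof (pp HQ x a (mul x a) Hxa Hax) as F1.
  pose proof (idr HQ y) as F2.
  pose proof (pp HQ a x (mul x y) Hax Hxa) as F3.
  pose proof (d1 HQ (mul (mul a x) a) a) as F4.
  pose proof (pp HQ x a (mul a y) Hxa Hax) as F5.
  pose proof (pp HQ x a a Hxa Hax) as F6.
  pose proof (pp HQ x a y Hxa Hax) as F7.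
  pose proof (d3 HQ (ldiv HQ (mul a e) (mul a (mul e (mul y x)))) (ldiv HQ (mul a e) (mul a (mul e (mul y y))))) as F8.
  pose proof (d1 HQ x (mul e (mul (mul y x) (mul y y)))) as F9.
  pose proof (autT HQ x (mul x y) a) as F10.
  pose proof (autL HQ a (mul y x) y x) as F11.
  pose proof (d4 HQ (mul (mul y x) e) (mul x e)) as F12.
  pose proof (d3 HQ (rdiv HQ (mul (mul a a) e) (mul a e)) (rdiv HQ (mul (mul x a) e) (mul a e))) as F13.
  pose proof (autR HQ y x a x) as F14.
  pose proof (d1 HQ (ldiv HQ a (mul x a)) (ldiv HQ a (mul x a))) as F15.
  pose proof (d1 HQ e (mul x (mul a (mul y y)))) as F16.
  pose proof (autR HQ e a a y) as F17.
  pose proof (autL HQ e e y y) as F18.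
  pose proof (autL HQ x e a y) as F19.
  pose proof (d1 HQ (rdiv HQ (mul (mul x e) a) (mul e a)) (rdiv HQ (mul (mul (mul a y) e) a) (mul e a))) as F20.
  pose proof (autL HQ x e a (mul y y)) as F21.
  pose proof (d1 HQ (ldiv HQ (mul x e) (mul x (mul e a))) (ldiv HQ (mul x e) (mul x (mul e y)))) as F22.
  pose proof (d3 HQ (mul (mul x (mul a y)) e) a) as F23.
  pose proof (autL HQ e x x y) as F24.
  pose proof (d1 HQ a (mul e x)) as F25.
  pose proof Hax as F26.
  pose proof (d3 HQ (mul (mul y x) a) (ldiv HQ (mul (mul y x) a) (mul (mul y x) (mul a x)))) as F27.
  pose proof (autL HQ e x y x) as F28.
  pose proof Hxa as F29.
  pose proof (autR HQ e a a a) as F30.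
  pose proof (d3 HQ (mul (mul a a) e) a) as F31.
  pose proof (autL HQ e a x (mul a y)) as F32.
  pose proof (autL HQ e a (mul y x) (mul y y)) as F33.
  pose proof (idl HQ y) as F34.
  pose proof (autL HQ x a y y) as F35.
  pose proof (d1 HQ a (mul e (mul x (mul a y)))) as F36.
  pose proof (d1 HQ e (mul e y)) as F37.
  pose proof (d1 HQ a (mul e (mul (mul y x) (mul y y)))) as F38.
  pose proof (d2 HQ (mul y x) (mul (mul (mul y x) a) (mul y x))) as F39.
  pose proof (d3 HQ (rdiv HQ (mul (mul a y) x) (mul y x)) (rdiv HQ (mul (mul x y) x) (mul y x))) as F40.
  pose proof (autR HQ x a y y) as F41.
  pose proof (d3 HQ (ldiv HQ (mul x e) (mul x (mul e (mul y x)))) (ldiv HQ (mul x e) (mul x (mul e (mul y y))))) as F42.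
  pose proof (d3 HQ (ldiv HQ x (mul x x)) (ldiv HQ x (mul (mul x y) x))) as F43.
  pose proof (d4 HQ (mul (mul a y) x) (mul y x)) as F44.
  pose proof (d1 HQ e (mul e (mul y y))) as F45.
  pose proof (autR HQ e a (mul y a) x) as F46.
  pose proof (autR HQ a e a x) as F47.
  pose proof (autT HQ (mul y x) (mul y x) a) as F48.
  pose proof (d1 HQ (ldiv HQ (mul x e) (mul x (mul e a))) (ldiv HQ (mul x e) (mul x (mul e (mul y y))))) as F49.
  pose proof (autR HQ x e y a) as F50.
  pose proof (d3 HQ (mul (mul y x) e) a) as F51.
  pose proof (d2 HQ (mul (mul y x) a) (mul (mul y x) (mul a y))) as F52.
  pose proof (autR HQ e a a x) as F53.
  pose proof (d2 HQ (mul e x) (mul e (mul x (mul a (mul y y))))) as F54.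
  pose proof (idl HQ a) as F55.
  pose proof (d1 HQ a (mul e (mul y x))) as F56.
  pose proof (d4 HQ (mul (mul (mul y y) x) a) (mul x a)) as F57.
  pose proof (d1 HQ a (mul e (mul x y))) as F58.
  pose proof (pp HQ a x x Hax Hxa) as F59.
  pose proof (d1 HQ x (mul e a)) as F60.
  pose proof (d2 HQ (mul x e) (mul x (mul e y))) as F61.
  pose proof (autR HQ a x y y) as F62.
  pose proof (d2 HQ x (mul (mul x y) x)) as F63.
  pose proof (d3 HQ (ldiv HQ x (mul (mul x y) x)) (ldiv HQ x (mul a x))) as F64.
  pose proof (d3 HQ x (mul e a)) as F65.
  pose proof (autL HQ e x (mul y x) (mul y y)) as F66.
  pose proof (d3 HQ (mul (mul a x) a) a) as F67.
  pose proof (d3 HQ e (mul a (mul x a))) as F68.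
  pose proof (autL HQ e a a y) as F69.
  pose proof (d1 HQ (ldiv HQ (mul a e) (mul a (mul e x))) (ldiv HQ (mul a e) (mul a (mul e (mul x y))))) as F70.
  pose proof (d4 HQ (mul (mul (mul y y) a) x) (mul a x)) as F71.
  pose proof (d1 HQ (rdiv HQ (mul (mul a e) a) (mul e a)) (rdiv HQ (mul (mul y e) a) (mul e a))) as F72.
  pose proof (autL HQ e x y y) as F73.
  pose proof (pp HQ x a (mul y y) Hxa Hax) as F74.
  pose proof (d1 HQ (mul (mul y x) a) (mul y x)) as F75.
  pose proof (d1 HQ e (mul e (mul (mul y x) a))) as F76.
  pose proof (d1 HQ (mul y x) (mul y x)) as F77.
  pose proof (d3 HQ (rdiv HQ (mul (mul y x) e) (mul x e)) (rdiv HQ (mul (mul a x) e) (mul x e))) as F78.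
  pose proof (d1 HQ x (mul a (mul x y))) as F79.
  pose proof (pp HQ a x (mul y y) Hax Hxa) as F80.
  pose proof (d3 HQ (mul (mul x a) e) a) as F81.
  pose proof (pp HQ a x y Hax Hxa) as F82.
  pose proof (autR HQ e a y a) as F83.
  pose proof (d3 HQ (mul (mul x a) x) a) as F84.
  pose proof (d2 HQ (mul y x) (mul a (mul y x))) as F85.
  pose proof (d2 HQ (mul (mul y x) a) (mul (mul y x) (mul a x))) as F86.
  pose proof (d3 HQ (mul y e) a) as F87.
  pose proof (d3 HQ (rdiv HQ (mul (mul (mul y a) e) a) (mul e a)) (rdiv HQ (mul (mul x e) a) (mul e a))) as F88.
  pose proof (d3 HQ (ldiv HQ (mul (mul y x) a) (mul (mul y x) (mul a y))) (ldiv HQ (mul (mul y x) a) (mul (mul y x) (mul a x)))) as F89.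
  pose proof (autL HQ x e y y) as F90.
  pose proof (d3 HQ (mul x a) (mul y x)) as F91.
  pose proof (eq_sym F2) as E1.
  pose proof (eq_trans (f_equal2 mul E1 (@eq_refl _ a)) (eq_sym (f_equal2 mul E1 (@eq_refl _ a)))) as E2.
  pose proof (eq_trans (f_equal2 mul E1 (@eq_refl _ a)) (eq_sym (f_equal2 mul E1 (@eq_refl _ a)))) as E3.
  pose proof (eq_trans (f_equal2 mul E2 (@eq_refl _ x)) (eq_sym (f_equal2 mul E3 (@eq_refl _ x)))) as E4.
  pose proof F26 as E5.
  pose proof (eq_trans (eq_sym F55) (eq_sym (f_equal2 mul E5 (@eq_refl _ a)))) as E6.
  pose proof (eq_sym F29) as E7.
  pose proof (eq_trans (eq_sym (eq_sym F6)) (eq_sym (f_equal2 mul (@eq_refl _ a) E7))) as E8.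
  pose proof (eq_trans (eq_trans (eq_trans (f_equal2 mul (@eq_refl _ a) E7) (eq_sym F6)) (f_equal2 mul E5 (@eq_refl _ a))) (eq_sym (eq_sym F55))) as E9.
  pose proof (eq_trans (eq_sym (f_equal2 mul E9 (@eq_refl _ a))) (eq_sym (f_equal2 mul E8 (@eq_refl _ a)))) as E10.
  pose proof (eq_trans (eq_sym F4) (eq_sym (f_equal2 (ldiv HQ) E6 E10))) as E11.
  pose proof (eq_sym F34) as E12.
  pose proof (eq_sym F26) as E13.
  pose proof (eq_sym (eq_sym F29)) as E14.
  pose proof (eq_trans (eq_trans (eq_trans (eq_sym F55) (eq_sym (f_equal2 mul E5 (@eq_refl _ a)))) (eq_sym (eq_sym F6))) (eq_sym (f_equal2 mul (@eq_refl _ a) E7))) as E15.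
  pose proof (eq_trans (eq_trans (eq_trans (eq_sym (f_equal2 mul E14 (@eq_refl _ x))) (eq_sym (eq_sym F59))) (eq_sym (f_equal2 mul (@eq_refl _ x) E13))) (eq_sym (f_equal2 mul (@eq_refl _ x) E14))) as E16.
  pose proof (eq_trans (f_equal2 mul E5 (@eq_refl _ a)) (eq_sym (eq_sym F55))) as E17.
  pose proof (eq_trans (f_equal2 mul (@eq_refl _ a) E7) (eq_sym F6)) as E18.
  pose proof (eq_trans (eq_trans (eq_trans (f_equal2 mul E17 (@eq_refl _ a)) (eq_sym (f_equal2 mul E9 (@eq_refl _ a)))) (eq_sym (f_equal2 mul E8 (@eq_refl _ a)))) (eq_sym (f_equal2 mul E18 (@eq_refl _ a)))) as E19.
  pose proof (eq_sym F55) as E20.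
  pose proof (eq_trans (f_equal2 mul E18 (@eq_refl _ a)) (eq_sym (f_equal2 mul E18 (@eq_refl _ a)))) as E21.
  pose proof (eq_trans (eq_trans (eq_trans (eq_trans (f_equal2 (rdiv HQ) E21 (@eq_refl _ (mul e a))) (eq_sym (f_equal2 (rdiv HQ) E19 E20))) (eq_sym (eq_sym F67))) (eq_sym (f_equal2 mul E13 (@eq_refl _ a)))) (eq_sym (eq_sym F55))) as E22.
  pose proof (eq_trans (f_equal2 mul E18 (@eq_refl _ a)) (eq_sym (f_equal2 mul E18 (@eq_refl _ a)))) as E23.
  pose proof (eq_trans (eq_trans (eq_trans (eq_trans (f_equal2 (rdiv HQ) E23 (@eq_refl _ (mul e a))) (eq_sym (f_equal2 (rdiv HQ) E19 E20))) (eq_sym (eq_sym F67))) (eq_sym (f_equal2 mul E13 (@eq_refl _ a)))) (eq_sym (eq_sym F55))) as E24.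
  pose proof (eq_trans (eq_trans (eq_trans (eq_trans (eq_trans (eq_trans (f_equal2 mul E18 (@eq_refl _ a)) (f_equal2 mul E8 (@eq_refl _ a))) (f_equal2 mul E9 (@eq_refl _ a))) (eq_sym (f_equal2 mul E22 E24))) (eq_sym F30)) (eq_sym (f_equal2 (rdiv HQ) (@eq_refl _ (mul (mul (mul a a) e) a)) E20))) (eq_sym (eq_sym F31))) as E25.
  pose proof (eq_trans (eq_trans (eq_sym (f_equal2 mul E5 (@eq_refl _ a))) (eq_sym (eq_sym F6))) (eq_sym (f_equal2 mul (@eq_refl _ a) E7))) as E26.
  pose proof (eq_trans (eq_trans (eq_trans (eq_trans (eq_sym F55) (f_equal2 mul E13 (@eq_refl _ a))) (eq_sym F67)) (f_equal2 (rdiv HQ) E19 E20)) (f_equal2 (rdiv HQ) E25 E26)) as E27.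
  pose proof (eq_trans (f_equal2 mul E14 (@eq_refl _ e)) (eq_sym (f_equal2 mul E14 (@eq_refl _ e)))) as E28.
  pose proof (eq_trans (f_equal2 mul E5 (@eq_refl _ e)) (eq_sym (f_equal2 mul E14 (@eq_refl _ e)))) as E29.
  pose proof (eq_sym (f_equal2 mul E29 (@eq_refl _ a))) as E30.
  pose proof (eq_trans (eq_sym (f_equal2 mul E8 (@eq_refl _ a))) (eq_sym (f_equal2 mul E18 (@eq_refl _ a)))) as E31.
  pose proof (eq_trans (eq_trans (eq_trans (eq_trans (f_equal2 (rdiv HQ) E31 (@eq_refl _ (mul e a))) (eq_sym (f_equal2 (rdiv HQ) E19 E20))) (eq_sym (eq_sym F67))) (eq_sym (f_equal2 mul E13 (@eq_refl _ a)))) (eq_sym (eq_sym F55))) as E32.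
  pose proof (eq_trans (eq_trans (eq_trans (f_equal2 mul E14 (@eq_refl _ x)) (eq_sym (f_equal2 mul E14 (@eq_refl _ x)))) (eq_sym (eq_sym F59))) (eq_sym (f_equal2 mul (@eq_refl _ x) E13))) as E33.
  pose proof (eq_sym (f_equal2 mul E33 (@eq_refl _ a))) as E34.
  pose proof (eq_sym (eq_sym F55)) as E35.
  pose proof (eq_trans (eq_trans (eq_trans (eq_trans (eq_trans (eq_trans (f_equal2 (rdiv HQ) E34 E35) (eq_sym (eq_sym F84))) (eq_sym (f_equal2 mul E7 (@eq_refl _ x)))) (eq_sym (f_equal2 mul E14 (@eq_refl _ x)))) (eq_sym (eq_sym F59))) (eq_sym (f_equal2 mul (@eq_refl _ x) E13))) (eq_sym (f_equal2 mul (@eq_refl _ x) E14))) as E36.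
  pose proof (eq_trans (eq_trans (eq_trans (f_equal2 mul (@eq_refl _ x) E13) (eq_sym F59)) (f_equal2 mul E14 (@eq_refl _ x))) (eq_sym (f_equal2 mul E14 (@eq_refl _ x)))) as E37.
  pose proof (eq_trans (eq_trans (eq_trans (eq_trans (eq_trans (eq_trans (eq_trans (eq_trans (f_equal2 mul E14 (@eq_refl _ e)) (f_equal2 mul E7 (@eq_refl _ e))) (eq_sym F81)) (f_equal2 (rdiv HQ) E30 E20)) F53) (f_equal2 mul E32 E36)) (eq_sym F1)) (eq_sym (f_equal2 mul E37 (@eq_refl _ a)))) (eq_sym (f_equal2 mul E33 (@eq_refl _ a)))) as E38.
  pose proof (eq_trans (eq_trans (eq_trans (eq_trans (eq_trans (eq_trans (eq_trans (f_equal2 mul (@eq_refl _ x) E14) (f_equal2 mul (@eq_refl _ x) E13)) (eq_sym F59)) (f_equal2 mul E14 (@eq_refl _ x))) (f_equal2 mul E7 (@eq_refl _ x))) (eq_sym F84)) (eq_sym (f_equal2 (rdiv HQ) E38 E9))) (eq_sym (f_equal2 (rdiv HQ) E28 (@eq_refl _ (mul a e))))) as E39.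
  pose proof (eq_trans (f_equal2 mul E5 (@eq_refl _ a)) (eq_sym (eq_sym F55))) as E40.
  pose proof (eq_trans (eq_trans (eq_trans (eq_trans (f_equal2 mul (@eq_refl _ a) E14) (f_equal2 mul (@eq_refl _ a) E7)) (eq_sym F6)) (f_equal2 mul E5 (@eq_refl _ a))) (eq_sym (eq_sym F55))) as E41.
  pose proof (eq_trans (eq_trans (eq_trans (eq_trans (f_equal2 mul E40 (@eq_refl _ e)) (f_equal2 mul (@eq_refl _ a) E7)) (eq_sym F6)) (f_equal2 mul E5 (@eq_refl _ a))) (eq_sym (f_equal2 mul (@eq_refl _ e) E41))) as E42.
  pose proof (eq_sym (f_equal2 mul (@eq_refl _ a) E14)) as E43.
  pose proof (eq_trans (eq_trans (eq_trans (eq_trans (eq_trans (eq_sym (eq_sym F29)) (eq_sym F68)) (eq_sym (f_equal2 (rdiv HQ) E42 E43))) (eq_sym (eq_sym F47))) (eq_sym (f_equal2 mul E27 E39))) (eq_sym (f_equal2 mul (@eq_refl _ a) E16))) as E44.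
  pose proof (eq_trans (f_equal2 mul (@eq_refl _ a) E16) (eq_sym (f_equal2 mul (@eq_refl _ a) E16))) as E45.
  pose proof (eq_trans (eq_trans (eq_trans (eq_trans (eq_trans (f_equal2 mul (@eq_refl _ x) E13) (eq_sym F59)) (f_equal2 mul E14 (@eq_refl _ x))) (eq_sym F25)) (eq_sym (f_equal2 (ldiv HQ) E9 E45))) (eq_sym (f_equal2 (ldiv HQ) E15 E44))) as E46.
  pose proof (eq_trans (eq_trans (eq_trans (eq_trans (eq_trans (eq_trans (eq_trans (eq_trans (f_equal2 mul E33 (@eq_refl _ a)) (f_equal2 mul E37 (@eq_refl _ a))) F1) (f_equal2 mul E27 E39)) (eq_sym F47)) (f_equal2 (rdiv HQ) E42 E43)) F68) (eq_sym F29)) (eq_sym (f_equal2 mul (@eq_refl _ x) E35))) as E47.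
  pose proof (eq_trans (eq_trans (eq_trans (f_equal2 mul E7 (@eq_refl _ x)) (eq_sym F84)) (f_equal2 (rdiv HQ) E47 E20)) (eq_sym (eq_sym F65))) as E48.
  pose proof (eq_trans (eq_trans (eq_trans (eq_trans (eq_trans (eq_trans (eq_sym F65) (eq_sym (f_equal2 (rdiv HQ) E47 E20))) (eq_sym (eq_sym F84))) (eq_sym (f_equal2 mul E7 (@eq_refl _ x)))) (eq_sym F25)) (eq_sym (f_equal2 (ldiv HQ) E9 E45))) (eq_sym (f_equal2 (ldiv HQ) E15 E44))) as E49.
  pose proof (eq_trans (f_equal2 mul (@eq_refl _ x) E48) (f_equal2 mul E49 E49)) as E50.
  pose proof (eq_trans (eq_trans (eq_trans (eq_trans (eq_trans (eq_trans (eq_trans (f_equal2 mul (@eq_refl _ x) E13) (eq_sym F59)) (f_equal2 mul E14 (@eq_refl _ x))) (eq_sym F25)) (eq_sym (f_equal2 (ldiv HQ) E9 E45))) (eq_sym (f_equal2 (ldiv HQ) E15 E44))) (eq_sym F15)) (eq_sym (f_equal2 (ldiv HQ) E46 E50))) as E51.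
  pose proof F34 as E52.
  pose proof (eq_trans (f_equal2 mul (@eq_refl _ x) E52) (eq_sym (f_equal2 mul (@eq_refl _ x) E52))) as E53.
  pose proof (f_equal2 (ldiv HQ) (@eq_refl _ (mul x e)) E53) as E54.
  pose proof (eq_trans (f_equal2 mul (@eq_refl _ a) E16) (eq_sym (f_equal2 mul (@eq_refl _ a) E16))) as E55.
  pose proof (eq_trans (eq_trans (eq_trans (eq_trans (f_equal2 (ldiv HQ) E9 E55) F25) (eq_sym (f_equal2 mul E14 (@eq_refl _ x)))) (eq_sym (eq_sym F59))) (eq_sym (f_equal2 mul (@eq_refl _ x) E13))) as E56.
  pose proof (eq_trans (eq_trans (eq_trans (eq_trans (eq_trans (eq_sym F65) (eq_sym (f_equal2 (rdiv HQ) E47 E20))) (eq_sym (eq_sym F84))) (eq_sym (f_equal2 mul E7 (@eq_refl _ x)))) (eq_sym F25)) (eq_sym (f_equal2 (ldiv HQ) E9 E45))) as E57.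
  pose proof (eq_trans (eq_sym F58) (eq_sym (f_equal2 (ldiv HQ) E9 (@eq_refl _ (mul a (mul e (mul x y))))))) as E58.
  pose proof (eq_sym (f_equal2 mul E57 E58)) as E59.
  pose proof (eq_trans (eq_trans (eq_trans (eq_trans (eq_trans (eq_trans (eq_trans (eq_sym F58) (f_equal2 (ldiv HQ) E15 (@eq_refl _ (mul a (mul e (mul x y)))))) (eq_sym F70)) (f_equal2 (ldiv HQ) E56 E59)) F24) (eq_sym (f_equal2 mul E51 E54))) (eq_sym (eq_sym F61))) (eq_sym (f_equal2 mul (@eq_refl _ x) E12))) as E60.
  pose proof (eq_trans F7 (eq_sym (f_equal2 mul (@eq_refl _ a) E60))) as E61.
  pose proof (eq_trans (eq_trans (eq_trans (eq_trans (eq_trans (eq_trans (f_equal2 mul (@eq_refl _ x) E12) (eq_sym F61)) (f_equal2 mul E51 E54)) (eq_sym F24)) (eq_sym (f_equal2 (ldiv HQ) E56 E59))) (eq_sym (eq_sym F70))) (eq_sym (f_equal2 (ldiv HQ) E15 E61))) as E62.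
  pose proof (eq_sym (f_equal2 (rdiv HQ) E28 (@eq_refl _ (mul a e)))) as E63.
  pose proof (eq_trans (eq_trans (eq_trans (eq_trans (eq_trans (eq_trans (eq_trans (f_equal2 mul (@eq_refl _ (rdiv HQ (mul (mul a a) e) (mul a e))) E63) (eq_sym (f_equal2 mul E27 E39))) (eq_sym (f_equal2 mul E32 E36))) (eq_sym F53)) (eq_sym (f_equal2 (rdiv HQ) E30 E20))) (eq_sym (eq_sym F81))) (eq_sym (f_equal2 mul E7 (@eq_refl _ e)))) (eq_sym (f_equal2 mul E5 (@eq_refl _ e)))) as E64.
  pose proof (eq_trans (eq_trans (eq_trans (eq_trans (eq_trans (f_equal2 (rdiv HQ) E38 E9) (eq_sym (eq_sym F84))) (eq_sym (f_equal2 mul E7 (@eq_refl _ x)))) (eq_sym (f_equal2 mul E14 (@eq_refl _ x)))) (eq_sym (eq_sym F59))) (eq_sym (f_equal2 mul (@eq_refl _ x) E13))) as E65.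
  pose proof (eq_trans (f_equal2 mul E5 (@eq_refl _ y)) F34) as E66.
  pose proof (eq_trans (eq_trans (eq_trans (f_equal2 mul E9 (@eq_refl _ a)) (eq_sym (f_equal2 mul E9 (@eq_refl _ a)))) (eq_sym (f_equal2 mul E8 (@eq_refl _ a)))) (eq_sym (f_equal2 mul E18 (@eq_refl _ a)))) as E67.
  pose proof (eq_trans (eq_trans (eq_trans (eq_trans (eq_trans (eq_trans (f_equal2 (rdiv HQ) E67 (@eq_refl _ (mul e a))) (eq_sym (f_equal2 (rdiv HQ) E19 E20))) (eq_sym (eq_sym F67))) (eq_sym (f_equal2 mul E13 (@eq_refl _ a)))) (eq_sym (f_equal2 mul E5 (@eq_refl _ a)))) (eq_sym (eq_sym F6))) (eq_sym (f_equal2 mul (@eq_refl _ a) E7))) as E68.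
  pose proof (eq_trans (eq_trans (eq_trans (f_equal2 mul E9 (@eq_refl _ a)) (eq_sym (f_equal2 mul E9 (@eq_refl _ a)))) (eq_sym (f_equal2 mul E8 (@eq_refl _ a)))) (eq_sym (f_equal2 mul E18 (@eq_refl _ a)))) as E69.
  pose proof (eq_trans (eq_trans (eq_trans (eq_trans (f_equal2 (rdiv HQ) E69 (@eq_refl _ (mul e a))) (eq_sym (f_equal2 (rdiv HQ) E19 E20))) (eq_sym (eq_sym F67))) (eq_sym (f_equal2 mul E13 (@eq_refl _ a)))) (eq_sym (eq_sym F55))) as E70.
  pose proof (eq_trans (eq_trans (eq_sym (f_equal2 (rdiv HQ) (@eq_refl _ (mul (mul y e) a)) E20)) (eq_sym (eq_sym F87))) (eq_sym (eq_sym F2))) as E71.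
  pose proof (eq_trans (f_equal2 mul E70 E71) (eq_sym (f_equal2 mul (@eq_refl _ a) E52))) as E72.
  pose proof (eq_trans (eq_trans (eq_trans (eq_trans (eq_trans (eq_trans (f_equal2 mul (@eq_refl _ x) E13) (eq_sym F59)) (f_equal2 mul E14 (@eq_refl _ x))) (f_equal2 mul E7 (@eq_refl _ x))) (eq_sym F84)) (f_equal2 (rdiv HQ) E47 E20)) (eq_sym (eq_sym F65))) as E73.
  pose proof (eq_trans (eq_trans (f_equal2 mul (@eq_refl _ x) E35) (eq_sym (eq_sym F29))) (eq_sym F26)) as E74.
  pose proof (eq_trans (eq_trans F26 (eq_sym F29)) (eq_sym (f_equal2 mul (@eq_refl _ x) E35))) as E75.
  pose proof (eq_trans (eq_trans (eq_trans (eq_trans (eq_trans (f_equal2 mul (@eq_refl _ a) E7) (eq_sym F6)) (f_equal2 mul E5 (@eq_refl _ a))) (eq_sym F60)) (eq_sym (f_equal2 (ldiv HQ) (@eq_refl _ x) E75))) (eq_sym (f_equal2 (ldiv HQ) E73 E74))) as E76.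
  pose proof (eq_trans (eq_trans (eq_trans (eq_trans (eq_trans (eq_trans (eq_trans (eq_trans (eq_trans (eq_trans (f_equal2 mul (@eq_refl _ e) E14) (f_equal2 mul E7 (@eq_refl _ e))) (eq_sym F81)) (f_equal2 (rdiv HQ) E30 E20)) F53) (f_equal2 mul E32 E36)) (f_equal2 mul E27 E39)) (eq_sym F47)) (f_equal2 (rdiv HQ) E42 E43)) F68) (eq_sym F26)) as E77.
  pose proof (eq_trans (f_equal2 (ldiv HQ) E73 E74) (eq_sym (f_equal2 (ldiv HQ) E48 E77))) as E78.
  pose proof (eq_trans (eq_trans (eq_sym (f_equal2 mul E14 (@eq_refl _ x))) (eq_sym (eq_sym F59))) (eq_sym (f_equal2 mul (@eq_refl _ x) E13))) as E79.
  pose proof (eq_trans (eq_trans (eq_trans (eq_trans (eq_trans (eq_trans (eq_trans (eq_trans (eq_sym F58) (f_equal2 (ldiv HQ) E15 (@eq_refl _ (mul a (mul e (mul x y)))))) (eq_sym F70)) (f_equal2 (ldiv HQ) E56 E59)) F24) (eq_sym (f_equal2 mul E51 E54))) (eq_sym (eq_sym F61))) (eq_sym (f_equal2 mul (@eq_refl _ x) E12))) (eq_sym (f_equal2 mul (@eq_refl _ x) E52))) as E80.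
  pose proof (eq_sym (f_equal2 (ldiv HQ) E79 E80)) as E81.
  pose proof (eq_trans (eq_trans (f_equal2 mul E7 (@eq_refl _ x)) (eq_sym F84)) (eq_sym (f_equal2 (rdiv HQ) E34 E35))) as E82.
  pose proof (eq_trans (eq_trans (f_equal2 (rdiv HQ) E34 E35) (f_equal2 (rdiv HQ) E47 E20)) (eq_sym (eq_sym F65))) as E83.
  pose proof (eq_sym (f_equal2 (rdiv HQ) E69 (@eq_refl _ (mul e a)))) as E84.
  pose proof (eq_trans (eq_trans F17 (f_equal2 mul E84 (@eq_refl _ (rdiv HQ (mul (mul y e) a) (mul e a))))) (f_equal2 mul E70 E71)) as E85.
  pose proof (eq_trans (eq_trans (eq_trans (eq_trans (eq_trans (eq_sym F65) (eq_sym (f_equal2 (rdiv HQ) E47 E20))) (eq_sym (eq_sym F84))) (eq_sym (f_equal2 mul E7 (@eq_refl _ x)))) (eq_sym F25)) (eq_sym (f_equal2 (ldiv HQ) E9 (@eq_refl _ (mul a (mul e x)))))) as E86.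
  pose proof (eq_trans (eq_trans (f_equal2 mul (@eq_refl _ a) E35) (eq_sym (f_equal2 mul E9 (@eq_refl _ a)))) (eq_sym (f_equal2 mul E8 (@eq_refl _ a)))) as E87.
  pose proof (eq_trans (eq_sym F4) (eq_sym (f_equal2 (ldiv HQ) E18 E87))) as E88.
  pose proof (eq_trans (eq_trans (eq_trans (eq_trans (eq_sym F2) (eq_sym F87)) (f_equal2 (rdiv HQ) (@eq_refl _ (mul (mul y e) a)) E20)) (eq_sym F72)) (f_equal2 (ldiv HQ) E68 E72)) as E89.
  pose proof (eq_trans (f_equal2 mul E88 E89) (eq_sym F69)) as E90.
  pose proof (eq_trans (eq_trans (eq_trans (eq_trans (eq_sym F36) (eq_sym (f_equal2 (ldiv HQ) E9 (@eq_refl _ (mul a (mul e (mul x (mul a y)))))))) (eq_sym (eq_sym F32))) (eq_sym (f_equal2 mul E86 E90))) (eq_sym (f_equal2 mul E83 E85))) as E91.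
  pose proof (eq_trans (eq_trans (eq_trans (eq_trans (eq_trans (eq_trans (eq_trans (f_equal2 mul (@eq_refl _ a) E52) (eq_sym (f_equal2 mul E70 E71))) (eq_sym (f_equal2 mul E84 (@eq_refl _ (rdiv HQ (mul (mul y e) a) (mul e a)))))) (eq_sym F17)) (eq_sym F20)) (eq_sym (f_equal2 (ldiv HQ) E82 E91))) (eq_sym (eq_sym F19))) (eq_sym (f_equal2 mul E78 E81))) as E92.
  pose proof (eq_trans (eq_trans (eq_trans (eq_trans (eq_trans (eq_trans (eq_sym F2) (eq_sym F87)) (f_equal2 (rdiv HQ) (@eq_refl _ (mul (mul y e) a)) E20)) (eq_sym F72)) (f_equal2 (ldiv HQ) E68 E72)) (f_equal2 (ldiv HQ) E76 E92)) F22) as E93.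
  pose proof (eq_trans (eq_trans (eq_trans (eq_trans (eq_trans (eq_trans (eq_trans (eq_trans (eq_sym F65) (eq_sym (f_equal2 (rdiv HQ) E47 E20))) (eq_sym (eq_sym F84))) (eq_sym (f_equal2 mul E7 (@eq_refl _ x)))) (eq_sym F25)) (eq_sym (f_equal2 (ldiv HQ) E9 E45))) (eq_sym (f_equal2 (ldiv HQ) E15 E44))) (eq_sym F15)) (eq_sym (f_equal2 (ldiv HQ) E46 E50))) as E94.
  pose proof (eq_trans (eq_trans (eq_trans (eq_trans (eq_trans (eq_trans (eq_sym F65) (eq_sym (f_equal2 (rdiv HQ) E47 E20))) (eq_sym (eq_sym F84))) (eq_sym (f_equal2 mul E7 (@eq_refl _ x)))) (eq_sym (f_equal2 mul E14 (@eq_refl _ x)))) (eq_sym (eq_sym F59))) (eq_sym (f_equal2 mul (@eq_refl _ x) E13))) as E95.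
  pose proof (eq_trans (eq_trans (eq_trans (eq_trans (eq_trans (eq_sym F66) (eq_sym (f_equal2 (ldiv HQ) E95 (@eq_refl _ (mul x (mul e (mul (mul y x) (mul y y)))))))) (eq_sym (eq_sym F9))) (eq_sym F38)) (eq_sym (f_equal2 (ldiv HQ) E9 (@eq_refl _ (mul a (mul e (mul (mul y x) (mul y y)))))))) (eq_sym (eq_sym F33))) as E96.
  pose proof (eq_trans (eq_trans (eq_trans (eq_trans (eq_trans (eq_trans (eq_trans (eq_trans (eq_sym F68) (eq_sym (f_equal2 (rdiv HQ) E42 E43))) (eq_sym (eq_sym F47))) (eq_sym (f_equal2 mul E27 E39))) (eq_sym (f_equal2 mul E32 E36))) (eq_sym F53)) (eq_sym (f_equal2 (rdiv HQ) E30 E20))) (eq_sym (eq_sym F81))) (eq_sym (f_equal2 mul E7 (@eq_refl _ e)))) as E97.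
  pose proof (eq_trans (eq_trans (eq_trans (eq_trans (eq_trans (eq_trans (eq_trans (eq_trans (f_equal2 mul E7 (@eq_refl _ e)) (eq_sym F81)) (f_equal2 (rdiv HQ) E30 E20)) F53) (f_equal2 mul E32 E36)) (f_equal2 mul E27 E39)) (eq_sym F47)) (f_equal2 (rdiv HQ) E42 E43)) F68) as E98.
  pose proof (eq_trans (f_equal2 mul (@eq_refl _ e) E52) (eq_sym (f_equal2 mul (@eq_refl _ e) E52))) as E99.
  pose proof (eq_trans (eq_trans (f_equal2 (ldiv HQ) E98 E99) F37) F34) as E100.
  pose proof (eq_trans (eq_trans (eq_trans (eq_sym F45) (f_equal2 (ldiv HQ) E97 (@eq_refl _ (mul e (mul e (mul y y)))))) F18) (f_equal2 mul E100 E100)) as E101.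
  pose proof (eq_trans (eq_trans (eq_trans (f_equal2 (ldiv HQ) E73 E74) (f_equal2 (ldiv HQ) (@eq_refl _ x) E75)) F60) (eq_sym (eq_sym F55))) as E102.
  pose proof (eq_trans (f_equal2 mul (@eq_refl _ x) E52) (eq_sym (f_equal2 mul (@eq_refl _ x) E52))) as E103.
  pose proof (eq_trans (eq_trans (eq_trans (eq_trans (eq_trans (eq_trans (eq_trans (f_equal2 (ldiv HQ) (@eq_refl _ (mul x e)) E103) (eq_sym F22)) (eq_sym (f_equal2 (ldiv HQ) E76 E92))) (eq_sym (f_equal2 (ldiv HQ) E68 E72))) (eq_sym (eq_sym F72))) (eq_sym (f_equal2 (rdiv HQ) (@eq_refl _ (mul (mul y e) a)) E20))) (eq_sym (eq_sym F87))) (eq_sym (eq_sym F2))) as E104.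
  pose proof (eq_trans (f_equal2 mul (@eq_refl _ x) E52) (eq_sym (f_equal2 mul (@eq_refl _ x) E52))) as E105.
  pose proof (eq_trans (eq_trans (eq_trans (eq_trans (eq_trans (eq_trans (eq_trans (f_equal2 (ldiv HQ) (@eq_refl _ (mul x e)) E105) (eq_sym F22)) (eq_sym (f_equal2 (ldiv HQ) E76 E92))) (eq_sym (f_equal2 (ldiv HQ) E68 E72))) (eq_sym (eq_sym F72))) (eq_sym (f_equal2 (rdiv HQ) (@eq_refl _ (mul (mul y e) a)) E20))) (eq_sym (eq_sym F87))) (eq_sym (eq_sym F2))) as E106.
  pose proof (eq_trans F73 (f_equal2 mul E104 E106)) as E107.
  pose proof (eq_trans (f_equal2 mul (@eq_refl _ a) E101) (eq_sym (f_equal2 mul E102 E107))) as E108.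
  pose proof (eq_trans (eq_sym F49) (eq_sym (f_equal2 (ldiv HQ) E76 E108))) as E109.
  pose proof (eq_trans (eq_trans (eq_trans (eq_trans (eq_trans (eq_trans (eq_trans (eq_trans (f_equal2 mul E66 (@eq_refl _ x)) (f_equal2 mul E93 E94)) (eq_sym F28)) (eq_sym F42)) (f_equal2 (rdiv HQ) E96 E109)) F8) (f_equal2 (ldiv HQ) E9 (@eq_refl _ (mul a (mul e (mul y x)))))) F56) (f_equal2 mul E7 (@eq_refl _ (mul y x)))) as E110.
  pose proof (eq_trans (eq_trans (eq_trans (eq_trans (eq_trans (eq_trans (eq_trans (eq_trans (eq_trans (eq_trans (eq_trans (eq_trans (eq_trans (f_equal2 mul E5 (@eq_refl _ e)) (f_equal2 mul E7 (@eq_refl _ e))) (eq_sym F81)) (f_equal2 (rdiv HQ) E30 E20)) F53) (f_equal2 mul E32 E36)) (f_equal2 mul E27 E39)) (eq_sym F47)) (f_equal2 (rdiv HQ) E42 E43)) F68) (eq_sym F29)) (eq_sym F91)) (eq_sym (f_equal2 (rdiv HQ) E110 (@eq_refl _ (mul y x))))) (eq_sym (eq_sym F14))) as E111.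
  pose proof (eq_sym (f_equal2 mul (@eq_refl _ x) E48)) as E112.
  pose proof (eq_trans (eq_trans (eq_trans (eq_trans (eq_trans (eq_trans (eq_trans (eq_trans (eq_trans (eq_sym F65) (eq_sym (f_equal2 (rdiv HQ) E47 E20))) (eq_sym (eq_sym F84))) (eq_sym (f_equal2 mul E7 (@eq_refl _ x)))) (eq_sym F25)) (eq_sym (f_equal2 (ldiv HQ) E9 E45))) (eq_sym (f_equal2 (ldiv HQ) E15 E44))) (eq_sym F15)) (eq_sym (f_equal2 (ldiv HQ) E46 E50))) (eq_sym (f_equal2 (ldiv HQ) E95 E112))) as E113.
  pose proof (eq_trans (eq_sym F63) (f_equal2 mul E113 (@eq_refl _ (ldiv HQ x (mul (mul x y) x))))) as E114.
  pose proof F3 as E115.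
  pose proof (eq_trans (f_equal2 mul E5 (@eq_refl _ e)) (eq_sym (f_equal2 mul E5 (@eq_refl _ e)))) as E116.
  pose proof (f_equal2 (rdiv HQ) E116 (@eq_refl _ (mul x e))) as E117.
  pose proof (eq_trans (f_equal2 mul E1 (@eq_refl _ a)) (eq_sym (f_equal2 mul E1 (@eq_refl _ a)))) as E118.
  pose proof (f_equal2 mul E118 (@eq_refl _ x)) as E119.
  pose proof (eq_trans (f_equal2 mul E1 (@eq_refl _ a)) (eq_sym (f_equal2 mul E1 (@eq_refl _ a)))) as E120.
  pose proof (eq_trans (f_equal2 mul E120 (@eq_refl _ x)) F82) as E121.
  pose proof (f_equal2 mul E121 (@eq_refl _ e)) as E122.
  pose proof (eq_sym (f_equal2 mul E122 (@eq_refl _ a))) as E123.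
  pose proof (eq_trans (eq_sym F87) (f_equal2 (rdiv HQ) (@eq_refl _ (mul (mul y e) a)) E20)) as E124.
  pose proof (eq_trans (eq_trans (eq_trans (eq_sym (f_equal2 mul E15 (@eq_refl _ a))) (eq_sym (f_equal2 mul E9 (@eq_refl _ a)))) (eq_sym (f_equal2 mul E8 (@eq_refl _ a)))) (eq_sym (f_equal2 mul E18 (@eq_refl _ a)))) as E125.
  pose proof (eq_trans (eq_trans (eq_trans (eq_trans (eq_sym F55) (f_equal2 mul E13 (@eq_refl _ a))) (eq_sym F67)) (f_equal2 (rdiv HQ) E19 E20)) (eq_sym (f_equal2 (rdiv HQ) E125 (@eq_refl _ (mul e a))))) as E126.
  pose proof (eq_trans (f_equal2 mul E1 (@eq_refl _ a)) (eq_sym (f_equal2 mul E1 (@eq_refl _ a)))) as E127.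
  pose proof (f_equal2 mul E127 (@eq_refl _ e)) as E128.
  pose proof (f_equal2 mul E128 (@eq_refl _ a)) as E129.
  pose proof (eq_trans (eq_trans (eq_trans (eq_sym (f_equal2 (rdiv HQ) E129 (@eq_refl _ (mul e a)))) (eq_sym (eq_sym F83))) (eq_sym (f_equal2 mul E124 E126))) (eq_sym (f_equal2 mul E1 (@eq_refl _ a)))) as E130.
  pose proof (eq_trans (f_equal2 mul E1 (@eq_refl _ a)) (eq_sym (f_equal2 mul E1 (@eq_refl _ a)))) as E131.
  pose proof (f_equal2 mul E131 (@eq_refl _ e)) as E132.
  pose proof (f_equal2 mul E132 (@eq_refl _ a)) as E133.
  pose proof (eq_trans (eq_trans (eq_trans (eq_trans (f_equal2 (rdiv HQ) E133 (@eq_refl _ (mul e a))) (eq_sym (f_equal2 (rdiv HQ) E129 (@eq_refl _ (mul e a))))) (eq_sym (eq_sym F83))) (eq_sym (f_equal2 mul E124 E126))) (eq_sym (f_equal2 mul E1 (@eq_refl _ a)))) as E134.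
  pose proof (eq_trans (f_equal2 mul E73 (@eq_refl _ a)) (eq_sym (f_equal2 mul (@eq_refl _ x) E35))) as E135.
  pose proof (eq_trans (f_equal2 (rdiv HQ) E135 (@eq_refl _ (mul e a))) (eq_sym (eq_sym F65))) as E136.
  pose proof (eq_trans (eq_trans (eq_trans (eq_trans (eq_trans (eq_trans (f_equal2 mul E119 (@eq_refl _ e)) (f_equal2 mul E121 (@eq_refl _ e))) (eq_sym F23)) (f_equal2 (rdiv HQ) E123 E20)) F46) (f_equal2 mul E130 E83)) (eq_sym (f_equal2 mul E134 E136))) as E137.
  pose proof (eq_trans (f_equal2 mul (@eq_refl _ x) E35) (f_equal2 mul E95 (@eq_refl _ a))) as E138.
  pose proof (eq_trans (eq_trans (eq_trans (eq_trans (eq_trans (eq_trans (f_equal2 mul (@eq_refl _ x) E13) (eq_sym F59)) (f_equal2 mul E14 (@eq_refl _ x))) (f_equal2 mul E7 (@eq_refl _ x))) (eq_sym F84)) (f_equal2 (rdiv HQ) E47 E20)) (f_equal2 (rdiv HQ) E138 (@eq_refl _ (mul e a)))) as E139.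
  pose proof (eq_trans (f_equal2 mul E1 (@eq_refl _ a)) (eq_sym (f_equal2 mul E1 (@eq_refl _ a)))) as E140.
  pose proof (f_equal2 mul E140 (@eq_refl _ e)) as E141.
  pose proof (f_equal2 mul E141 (@eq_refl _ a)) as E142.
  pose proof (eq_trans (eq_trans (eq_trans (eq_trans (eq_trans (eq_trans (eq_trans (f_equal2 mul (@eq_refl _ (rdiv HQ (mul (mul y x) e) (mul x e))) E117) (eq_sym F50)) (f_equal2 (rdiv HQ) E137 E139)) F88) (eq_sym (f_equal2 (rdiv HQ) E142 (@eq_refl _ (mul e a))))) (eq_sym (f_equal2 (rdiv HQ) E129 (@eq_refl _ (mul e a))))) (eq_sym (eq_sym F83))) (eq_sym (f_equal2 mul E124 E126))) as E143.
  pose proof (eq_trans (f_equal2 mul E5 (@eq_refl _ e)) (eq_sym (f_equal2 mul E5 (@eq_refl _ e)))) as E144.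
  pose proof (eq_trans (eq_trans (eq_trans (eq_trans (eq_trans (eq_trans (f_equal2 (rdiv HQ) E144 (@eq_refl _ (mul x e))) (eq_sym (f_equal2 (rdiv HQ) E64 E65))) (eq_sym (eq_sym F13))) (eq_sym (f_equal2 (rdiv HQ) E25 E26))) (eq_sym (f_equal2 (rdiv HQ) E19 E20))) (eq_sym (eq_sym F67))) (eq_sym (f_equal2 mul E13 (@eq_refl _ a)))) as E145.
  pose proof (eq_trans (eq_trans (eq_trans (eq_trans (eq_sym F78) (f_equal2 (rdiv HQ) E143 E145)) (eq_sym (f_equal2 (rdiv HQ) (@eq_refl _ (mul (mul y e) a)) E20))) (eq_sym (eq_sym F87))) (eq_sym (eq_sym F2))) as E146.
  pose proof (eq_trans (eq_sym F12) (f_equal2 mul E146 E73)) as E147.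
  pose proof (eq_trans (eq_trans (eq_trans (eq_trans (eq_sym F10) (f_equal2 (ldiv HQ) (@eq_refl _ x) E115)) F79) (eq_sym F7)) (eq_sym (f_equal2 mul E147 (@eq_refl _ a)))) as E148.
  pose proof (eq_trans (eq_trans (f_equal2 (ldiv HQ) (@eq_refl _ x) E75) F60) (eq_sym (eq_sym F55))) as E149.
  pose proof (eq_trans (eq_trans (eq_trans (eq_trans (eq_sym (f_equal2 mul E146 E73)) (eq_sym (eq_sym F12))) (eq_sym F51)) (eq_sym (f_equal2 (rdiv HQ) E148 E149))) (eq_sym (eq_sym F64))) as E150.
  pose proof (eq_trans (eq_trans (eq_trans (eq_trans (eq_trans (eq_trans (eq_trans (eq_trans (eq_trans (eq_trans (f_equal2 mul (@eq_refl _ x) E13) (eq_sym F59)) (f_equal2 mul E14 (@eq_refl _ x))) (eq_sym F25)) (eq_sym (f_equal2 (ldiv HQ) E9 E45))) (eq_sym (f_equal2 (ldiv HQ) E15 E44))) (eq_sym F15)) (eq_sym (f_equal2 (ldiv HQ) E46 E50))) (eq_sym (f_equal2 (ldiv HQ) E95 E112))) (eq_sym F43)) (eq_sym (f_equal2 (rdiv HQ) E114 E150))) as E151.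
  pose proof (eq_trans (eq_trans (eq_trans (eq_trans (eq_trans (eq_trans (eq_trans (eq_trans (eq_sym F55) (f_equal2 mul E13 (@eq_refl _ a))) (eq_sym F67)) (f_equal2 (rdiv HQ) E19 E20)) (f_equal2 (rdiv HQ) E25 E26)) (eq_sym F13)) (f_equal2 (rdiv HQ) E64 E65)) (f_equal2 (rdiv HQ) E111 E151)) F40) as E152.
  pose proof (eq_trans (f_equal2 mul E152 (@eq_refl _ (mul y x))) F44) as E153.
  pose proof (eq_trans (eq_trans (eq_trans (f_equal2 mul E86 E90) (eq_sym F32)) (f_equal2 (ldiv HQ) E9 (@eq_refl _ (mul a (mul e (mul x (mul a y))))))) F36) as E154.
  pose proof (eq_trans (eq_trans (f_equal2 mul E153 (@eq_refl _ a)) F5) (f_equal2 mul (@eq_refl _ a) E154)) as E155.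
  pose proof (eq_trans (eq_trans (eq_trans (eq_trans (eq_trans (eq_trans (eq_trans (eq_trans (eq_trans F7 (f_equal2 mul E11 E62)) (eq_sym F0)) (f_equal2 (ldiv HQ) (@eq_refl _ a) E155)) (eq_sym (f_equal2 (ldiv HQ) E9 (@eq_refl _ (mul a (mul e (mul x (mul a y)))))))) (eq_sym (eq_sym F32))) (eq_sym (f_equal2 mul E86 E90))) (eq_sym F82)) (eq_sym (f_equal2 mul E120 (@eq_refl _ x)))) (eq_sym (f_equal2 mul E3 (@eq_refl _ x)))) as E156.
  pose proof (eq_trans (eq_sym (eq_sym F29)) (eq_sym F26)) as E157.
  pose proof (eq_trans (f_equal2 (rdiv HQ) E4 (@eq_refl _ (mul a x))) (eq_sym (f_equal2 (rdiv HQ) E156 E157))) as E158.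
  pose proof (eq_sym (f_equal2 (rdiv HQ) E156 E157)) as E159.
  pose proof (eq_trans (eq_trans F41 (eq_sym (f_equal2 mul E158 E159))) (eq_sym F62)) as E160.
  pose proof (eq_trans (eq_trans (eq_trans (eq_sym F55) (eq_sym F60)) (eq_sym (f_equal2 (ldiv HQ) (@eq_refl _ x) E75))) (eq_sym (f_equal2 (ldiv HQ) E48 E77))) as E161.
  pose proof (eq_trans (eq_trans (eq_trans (eq_trans (eq_trans (eq_trans (eq_trans (eq_sym F2) (eq_sym F87)) (f_equal2 (rdiv HQ) (@eq_refl _ (mul (mul y e) a)) E20)) (eq_sym F72)) (f_equal2 (ldiv HQ) E68 E72)) (f_equal2 (ldiv HQ) E76 E92)) F22) (eq_sym (f_equal2 (ldiv HQ) E79 E80))) as E162.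
  pose proof (eq_trans (eq_trans (f_equal2 mul (@eq_refl _ x) E13) (eq_sym F59)) (f_equal2 mul E14 (@eq_refl _ x))) as E163.
  pose proof (eq_trans (eq_trans (eq_trans (eq_trans (eq_trans (eq_trans (eq_trans (eq_trans (f_equal2 mul (@eq_refl _ x) E52) (f_equal2 mul (@eq_refl _ x) E12)) (eq_sym F61)) (f_equal2 mul E51 E54)) (eq_sym F24)) (eq_sym (f_equal2 (ldiv HQ) E56 E59))) (eq_sym (eq_sym F70))) (eq_sym (f_equal2 (ldiv HQ) E15 (@eq_refl _ (mul a (mul e (mul x y))))))) (eq_sym (eq_sym F58))) as E164.
  pose proof (eq_trans (eq_trans (eq_trans (eq_trans (eq_trans (eq_trans (eq_trans (eq_sym F2) (eq_sym F87)) (f_equal2 (rdiv HQ) (@eq_refl _ (mul (mul y e) a)) E20)) (eq_sym F72)) (f_equal2 (ldiv HQ) E68 E72)) (f_equal2 (ldiv HQ) E76 E92)) F22) (f_equal2 (ldiv HQ) E163 E164)) as E165.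
  pose proof (eq_trans (f_equal2 mul E162 E165) (eq_sym F90)) as E166.
  pose proof (eq_trans F21 (eq_sym (f_equal2 mul E161 E166))) as E167.
  pose proof (eq_trans (eq_trans (eq_trans (eq_trans (eq_trans (eq_trans (eq_sym F54) (f_equal2 mul E48 E167)) (eq_sym F80)) (eq_sym F71)) (eq_sym (f_equal2 mul E160 E157))) (eq_sym (eq_sym F57))) (eq_sym (eq_sym F74))) as E168.
  pose proof (eq_trans (eq_trans (eq_trans (eq_trans (eq_trans (eq_trans (f_equal2 mul E86 E90) (eq_sym F32)) (f_equal2 (ldiv HQ) E9 (@eq_refl _ (mul a (mul e (mul x (mul a y))))))) (eq_sym (f_equal2 (ldiv HQ) (@eq_refl _ a) E155))) (eq_sym (eq_sym F0))) (eq_sym (f_equal2 mul E11 E62))) (eq_sym F7)) as E169.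
  pose proof (eq_trans (eq_trans (eq_trans (eq_trans (eq_trans F7 (f_equal2 mul E11 E62)) (eq_sym F0)) (f_equal2 (ldiv HQ) (@eq_refl _ a) E155)) F36) (f_equal2 mul (@eq_refl _ e) E169)) as E170.
  pose proof (eq_trans (eq_trans (eq_trans (eq_trans (eq_trans (f_equal2 mul E11 E62) (eq_sym F0)) (f_equal2 (ldiv HQ) (@eq_refl _ a) E155)) F36) (f_equal2 mul (@eq_refl _ e) E169)) (f_equal2 mul (@eq_refl _ e) E170)) as E171.
  pose proof (eq_trans (eq_trans (eq_trans (eq_trans (eq_trans (eq_trans (eq_trans F7 (f_equal2 mul E11 E62)) (eq_sym F0)) (f_equal2 (ldiv HQ) (@eq_refl _ a) E155)) F36) (f_equal2 mul (@eq_refl _ e) E169)) (eq_sym F76)) (eq_sym (f_equal2 (ldiv HQ) E5 E171))) as E172.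
  pose proof (eq_trans (f_equal2 mul (@eq_refl _ (mul y x)) E5) (eq_sym (f_equal2 mul (@eq_refl _ (mul y x)) E5))) as E173.
  pose proof (f_equal2 (ldiv HQ) (@eq_refl _ (mul (mul y x) a)) E173) as E174.
  pose proof F77 as E175.
  pose proof (eq_trans (eq_trans (eq_sym F85) (eq_sym (f_equal2 mul E175 (@eq_refl _ (ldiv HQ (mul y x) (mul a (mul y x))))))) (eq_sym F48)) as E176.
  pose proof (eq_trans (f_equal2 mul (@eq_refl _ (mul y x)) E176) F39) as E177.
  pose proof (eq_trans (f_equal2 mul (@eq_refl _ (mul y x)) E5) (eq_sym (f_equal2 mul (@eq_refl _ (mul y x)) E5))) as E178.
  pose proof (eq_trans (f_equal2 mul (@eq_refl _ (mul y x)) E5) (eq_sym (f_equal2 mul (@eq_refl _ (mul y x)) E5))) as E179.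
  pose proof (eq_trans (f_equal2 (ldiv HQ) (@eq_refl _ (mul (mul y x) a)) E178) (eq_sym (f_equal2 (ldiv HQ) (@eq_refl _ (mul (mul y x) a)) E179))) as E180.
  pose proof (eq_trans (eq_trans (eq_trans (eq_trans (eq_trans (eq_trans (eq_trans (eq_trans (f_equal2 mul (@eq_refl _ (ldiv HQ (mul (mul y x) a) (mul (mul y x) (mul a y)))) E174) (eq_sym F11)) (f_equal2 (ldiv HQ) (@eq_refl _ (mul (mul y x) a)) E177)) F75) (eq_sym (f_equal2 mul E146 E73))) (eq_sym (eq_sym F12))) (eq_sym (f_equal2 mul (@eq_refl _ (mul y x)) E5))) (eq_sym F86)) (eq_sym (f_equal2 mul (@eq_refl _ (mul (mul y x) a)) E180))) as E181.
  pose proof (eq_trans (f_equal2 mul (@eq_refl _ (mul y x)) E5) (eq_sym (f_equal2 mul (@eq_refl _ (mul y x)) E5))) as E182.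
  pose proof (eq_trans (f_equal2 mul (@eq_refl _ (mul y x)) E5) (eq_sym (f_equal2 mul (@eq_refl _ (mul y x)) E5))) as E183.
  pose proof (eq_trans (eq_sym (f_equal2 (ldiv HQ) (@eq_refl _ (mul (mul y x) a)) E183)) (eq_sym (f_equal2 (ldiv HQ) (@eq_refl _ (mul (mul y x) a)) E182))) as E184.
  pose proof (eq_trans (eq_trans (eq_trans (eq_trans (eq_trans (eq_trans (eq_trans (eq_trans (eq_trans (eq_trans (eq_sym F89) (f_equal2 (rdiv HQ) E181 E184)) F27) F7) (f_equal2 mul E11 E62)) (eq_sym F0)) (f_equal2 (ldiv HQ) (@eq_refl _ a) E155)) F36) (f_equal2 mul (@eq_refl _ e) E169)) (eq_sym F76)) (eq_sym (f_equal2 (ldiv HQ) E5 E171))) as E185.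
  pose proof (eq_trans (eq_trans (eq_trans (eq_trans (eq_trans (eq_trans (eq_trans (eq_trans (eq_trans (eq_sym F74) (eq_sym F57)) (f_equal2 mul E160 E157)) F71) F80) (eq_sym F16)) (f_equal2 (ldiv HQ) E13 E168)) F35) (eq_sym (f_equal2 mul E172 E185))) (eq_sym (eq_sym F52))) as E186.
  exact E186.
Qed.

Lemma commx {T mul e} (HQ : automorphic_loop T mul e) x a y :
  mul x a = e -> mul a x = e -> mul a y = mul y a -> mul x y = mul y x.
Proof. intros Hxa Hax Hh.
  pose proof Hax as F0.
  pose proof (idl HQ a) as F1.
  pose proof (pp HQ x a a Hxa Hax) as F2.
  pose proof (d1 HQ a (mul x (mul x a))) as F3.
  pose proof (d1 HQ (mul a e) y) as F4.
  pose proof Hh as F5.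
  pose proof (pp HQ x a y Hxa Hax) as F6.
  pose proof (autT HQ a y x) as F7.
  pose proof (d1 HQ a (mul x y)) as F8.
  pose proof (idl HQ x) as F9.
  pose proof Hxa as F10.
  pose proof (pp HQ a x x Hax Hxa) as F11.
  pose proof (eq_sym F10) as E1.
  pose proof (eq_sym F0) as E2.
  pose proof (eq_trans (eq_trans (eq_trans (f_equal2 mul (@eq_refl _ a) E1) (eq_sym F2)) (eq_sym (f_equal2 mul E2 (@eq_refl _ a)))) (eq_sym (eq_sym F1))) as E3.
  pose proof (eq_trans (eq_trans (eq_trans (eq_sym F1) (f_equal2 mul E2 (@eq_refl _ a))) F2) (eq_sym (f_equal2 mul (@eq_refl _ a) E1))) as E4.
  pose proof (eq_trans (eq_sym (f_equal2 mul E4 (@eq_refl _ y))) (eq_sym (eq_sym F5))) as E5.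
  pose proof (eq_trans (eq_sym F4) (f_equal2 (ldiv HQ) E3 E5)) as E6.
  pose proof (eq_trans F10 (eq_sym F0)) as E7.
  pose proof (eq_trans (eq_trans (eq_trans (eq_sym F9) (f_equal2 mul E1 (@eq_refl _ x))) F11) (eq_sym (f_equal2 mul (@eq_refl _ x) E7))) as E8.
  pose proof (eq_trans (eq_trans F10 (eq_sym F0)) (f_equal2 mul (@eq_refl _ a) E8)) as E9.
  pose proof (eq_trans (eq_trans (eq_trans (eq_trans (eq_trans (eq_sym F9) (f_equal2 mul E1 (@eq_refl _ x))) F11) (eq_sym (f_equal2 mul (@eq_refl _ x) E7))) (eq_sym F3)) (eq_sym (f_equal2 (ldiv HQ) (@eq_refl _ a) E9))) as E10.
  pose proof F6 as E11.
  pose proof (eq_trans (eq_trans (eq_trans (eq_sym F8) (eq_sym (f_equal2 (ldiv HQ) (@eq_refl _ a) E11))) (eq_sym (eq_sym F7))) (eq_sym (f_equal2 mul E6 E10))) as E12.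
  exact E12.
Qed.

Theorem corollary3p1 (T : Type) (mul : T -> T -> T) (e : T)
  (HQ : automorphic_loop T mul e) (x y xinv : T)
  (Hxinv : mul x xinv = e) :
  (mul xinv (mul x (mul y y)) = mul (mul x y) (mul xinv y) \/
   mul xinv (mul x (mul y y)) = mul (mul xinv y) (mul x y)) ->
  mul x y = mul y x.
Proof.
  pose proof (invl HQ x xinv Hxinv) as Hax.
  intros [H|H].
  - pose proof (id1 HQ x xinv y Hxinv Hax) as I.
    pose proof (d3 HQ (mul x y) (mul xinv y)) as D1.
    pose proof (d3 HQ (mul y x) (mul xinv y)) as D2.
    congruence.
  - apply (commx HQ x xinv y Hxinv Hax).
    pose proof (id1 HQ xinv x y Hax Hxinv) as I.
    pose proof (f2 HQ x xinv (mul y y) Hxinv Hax) as F.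
    pose proof (d3 HQ (mul xinv y) (mul x y)) as D1.
    pose proof (d3 HQ (mul y xinv) (mul x y)) as D2.
    congruence.
Qed.
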